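(* Let $P$ be a rectangle with horizontal sides of length $w$ and vertical sides of length $1$ (aspect ratio $w$). Its two ping-pong cylinders are $\lambda$-stable. These are the only $\lambda$-stable periodic cylinders unless $$w=\frac{p}{q}\cot\left(\frac{\pi p}{2(p+q)}\right)$$ for some positive integers $p,q$. When $w$ satisfies this equation, there are, in addition to the ping-pong cylinders, at most two more $\lambda$-stable periodic cylinders, and their slopes are $\pm p/(qw)$.
   Context: For a polygon $P$, let $\Phi$ be its billiard map (collision to collision, specular reflection), in coordinates $(s,\theta)$ with $s$ arc length on $\partial P$ and $\theta\in(-\pi/2,\pi/2)$ the angle from the inward normal. For $\lambda>0$ let $R_\lambda(s,\theta)=(s,\lambda\theta)$ and $\Phi_\lambda:=R_\lambda\circ\Phi$. A periodic cylinder is a maximal one-parameter family of parallel periodic orbits of $\Phi$ with the same itinerary (sequence of sides hit). A ping-pong cylinder consists of orbits bouncing perpendicularly between two parallel sides. A periodic orbit $q$ of $\Phi$ is $\lambda^{+}$-stable (resp. $\lambda^-$-stable) if there exist a strictly decreasing (resp. strictly increasing) sequence $\lambda_n\to1$ and periodic orbits $q_n$ of $\Phi_{\lambda_n}$ with the same itinerary as $q$ such that $q_n\to q$. A periodic cylinder is $\lambda$-stable if it contains a $\lambda^+$-stable periodic orbit and a $\lambda^-$-stable periodic orbit. The slope of a cylinder is the slope of the (unfolded) straight lines of its trajectories. *)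

(* Defs.v *)
From Stdlib Require Import Reals Lra.
Open Scope R_scope.

(** Boundary parametrised by arc length s,
    counterclockwise from the corner (0,0):
      side 0 (bottom) : 0     < s < w
      side 1 (right)  : w     < s < w+1
      side 2 (top)    : w+1   < s < 2w+1
      side 3 (left)   : 2w+1  < s < 2w+2
    Corners are excluded (the billiard map is not defined there). *)

Definition cot (x : R) : R := cos x / sin x.

Definition on_side (w : R) (i : nat) (s : R) : Prop :=
  match i with
  | 0%nat => 0 < s < w
  | 1%nat => w < s < w + 1
  | 2%nat => w + 1 < s < 2 * w + 1
  | 3%nat => 2 * w + 1 < s < 2 * w + 2
  | _ => False
  end.

Definition bpos (w s : R) : R * R :=
  if Rle_dec s w then (s, 0)
  else if Rle_dec s (w + 1) then (w, s - w)
  else if Rle_dec s (2 * w + 1) then (2 * w + 1 - s, 1)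
  else (0, 2 * w + 2 - s).

Definition normal (i : nat) : R * R :=
  match i with
  | 0%nat => (0, 1)
  | 1%nat => (-1, 0)
  | 2%nat => (0, -1)
  | _ => (1, 0)
  end.

(** Unit direction making angle th with the inward normal of side i
    (th > 0 = counterclockwise rotation of the normal). *)
Definition dir (i : nat) (th : R) : R * R :=
  (cos th * fst (normal i) - sin th * snd (normal i),
   sin th * fst (normal i) + cos th * snd (normal i)).

Definition vadd (a b : R * R) : R * R := (fst a + fst b, snd a + snd b).
Definition vscal (t : R) (a : R * R) : R * R := (t * fst a, t * snd a).
Definition vdot (a b : R * R) : R := fst a * fst b + snd a * snd b.

Definition reflect (d n : R * R) : R * R := vadd d (vscal (-2 * vdot d n) n).

Definition interior (w : R) (p : R * R) : Prop :=
  0 < fst p < w /\ 0 < snd p < 1.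

(** The billiard map Phi (collision to collision), as a (functional) relation
    on phase points (s, theta). *)
Definition Bill (w : R) (x y : R * R) : Prop :=
  exists (i j : nat) (t : R),
    on_side w i (fst x) /\ on_side w j (fst y) /\
    - (PI / 2) < snd x < PI / 2 /\ - (PI / 2) < snd y < PI / 2 /\
    0 < t /\
    bpos w (fst y) = vadd (bpos w (fst x)) (vscal t (dir i (snd x))) /\
    (forall tau, 0 < tau < t ->
       interior w (vadd (bpos w (fst x)) (vscal tau (dir i (snd x))))) /\
    dir j (snd y) = reflect (dir i (snd x)) (normal j).

(** Phi_lambda = R_lambda o Phi, with R_lambda (s,theta) = (s, lambda theta)
    (defined when the image stays in the phase space). *)
Definition PhiL (w lam : R) (x y : R * R) : Prop :=
  exists z, Bill w x z /\ y = (fst z, lam * snd z) /\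
            - (PI / 2) < lam * snd z < PI / 2.

Definition is_orbit (w : R) (F : R * R -> R * R -> Prop) (n : nat)
  (itin : nat -> nat) (q : nat -> R * R) : Prop :=
  (0 < n)%nat /\
  (forall k, (k < n)%nat -> F (q k) (q (S k))) /\
  q n = q 0%nat /\
  (forall k, (k < n)%nat -> on_side w (itin k) (fst (q k))).

Definition in_cyl (w : R) (n : nat) (itin : nat -> nat) (q : nat -> R * R) : Prop :=
  is_orbit w (Bill w) n itin q.

Definition is_cyl (w : R) (n : nat) (itin : nat -> nat) : Prop :=
  exists q, in_cyl w n itin q /\
            (forall k, (0 < k)%nat -> (k < n)%nat -> q k <> q 0%nat).

Definition lam_plus_stable (w : R) (n : nat) (itin : nat -> nat)
  (q : nat -> R * R) : Prop :=
  exists (lam : nat -> R) (qs : nat -> nat -> R * R),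
    (forall m, lam (S m) < lam m) /\ Un_cv lam 1 /\
    (forall m, is_orbit w (PhiL w (lam m)) n itin (qs m)) /\
    (forall k, (k < n)%nat ->
       Un_cv (fun m => fst (qs m k)) (fst (q k)) /\
       Un_cv (fun m => snd (qs m k)) (snd (q k))).

Definition lam_minus_stable (w : R) (n : nat) (itin : nat -> nat)
  (q : nat -> R * R) : Prop :=
  exists (lam : nat -> R) (qs : nat -> nat -> R * R),
    (forall m, 0 < lam m) /\
    (forall m, lam m < lam (S m)) /\ Un_cv lam 1 /\
    (forall m, is_orbit w (PhiL w (lam m)) n itin (qs m)) /\
    (forall k, (k < n)%nat ->
       Un_cv (fun m => fst (qs m k)) (fst (q k)) /\
       Un_cv (fun m => snd (qs m k)) (snd (q k))).

Definition lam_stable_cyl (w : R) (n : nat) (itin : nat -> nat) : Prop :=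
  is_cyl w n itin /\
  (exists q, in_cyl w n itin q /\ lam_plus_stable w n itin q) /\
  (exists q, in_cyl w n itin q /\ lam_minus_stable w n itin q).

(** Ping-pong cylinder: orbits bouncing perpendicularly between two
    parallel (opposite) sides. *)
Definition ping_pong (w : R) (n : nat) (itin : nat -> nat) : Prop :=
  n = 2%nat /\ itin 1%nat = ((itin 0%nat + 2) mod 4)%nat /\
  forall q, in_cyl w n itin q -> snd (q 0%nat) = 0 /\ snd (q 1%nat) = 0.

Definition cyl_set (w : R) (n : nat) (itin : nat -> nat) (x : R * R) : Prop :=
  exists q k, in_cyl w n itin q /\ (k < n)%nat /\ q k = x.

Definition cyl_abs_slope (w : R) (n : nat) (itin : nat -> nat) (r : R) : Prop :=
  forall q, in_cyl w n itin q -> forall k, (k < n)%nat ->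
    Rabs (snd (dir (itin k) (snd (q k)))) = r * Rabs (fst (dir (itin k) (snd (q k)))).

Definition special_width (w : R) (p q : nat) : Prop :=
  w = INR p / INR q * cot (PI * INR p / (2 * (INR p + INR q))).

(* Main.v *)
Require Import Defs.
From Stdlib Require Import Reals Lra Lia.
Open Scope R_scope.

Lemma on_side_lt4 w i s : on_side w i s -> (i < 4)%nat.
Proof. destruct i as [|[|[|[|i]]]]; simpl; intros; try lia; contradiction. Qed.

Lemma on_side_unique w i j s : 0 < w -> on_side w i s -> on_side w j s -> i = j.
Proof.
  intros hw.
  destruct i as [|[|[|[|i]]]]; destruct j as [|[|[|[|j]]]]; simpl; intros; try lra; try contradiction; reflexivity.
Qed.

Lemma bpos0 w s : on_side w 0 s -> bpos w s = (s, 0).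
Proof. simpl; intros [h1 h2]; unfold bpos; destruct (Rle_dec s w); [reflexivity| lra]. Qed.
Lemma bpos1 w s : on_side w 1 s -> bpos w s = (w, s - w).
Proof. simpl; intros [h1 h2]; unfold bpos; destruct (Rle_dec s w); [lra|].
  destruct (Rle_dec s (w+1)); [reflexivity|lra]. Qed.
Lemma bpos2 w s : 0 < w -> on_side w 2 s -> bpos w s = (2*w+1-s, 1).
Proof. simpl; intros hw [h1 h2]; unfold bpos; destruct (Rle_dec s w); [lra|].
  destruct (Rle_dec s (w+1)); [lra|]. destruct (Rle_dec s (2*w+1)); [reflexivity|lra]. Qed.
Lemma bpos3 w s : 0 < w -> on_side w 3 s -> bpos w s = (0, 2*w+2-s).
Proof. simpl; intros hw [h1 h2]; unfold bpos; destruct (Rle_dec s w); [lra|].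
  destruct (Rle_dec s (w+1)); [lra|]. destruct (Rle_dec s (2*w+1)); [lra|reflexivity]. Qed.

Definition pt_on (w : R) (i : nat) (P : R * R) : Prop :=
  match i with
  | 0%nat => snd P = 0 /\ 0 < fst P < w
  | 1%nat => fst P = w /\ 0 < snd P < 1
  | 2%nat => snd P = 1 /\ 0 < fst P < w
  | 3%nat => fst P = 0 /\ 0 < snd P < 1
  | _ => False
  end.

Lemma bpos_on w i s : 0 < w -> on_side w i s -> pt_on w i (bpos w s).
Proof.
  intros hw h. pose proof h as h'.
  destruct i as [|[|[|[|i]]]].
  - rewrite (bpos0 _ _ h); simpl in *; lra.
  - rewrite (bpos1 _ _ h); simpl in *; lra.
  - rewrite (bpos2 _ _ hw h); simpl in *; lra.
  - rewrite (bpos3 _ _ hw h); simpl in *; lra.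
  - contradiction.
Qed.

Lemma bpos_inj w i s s' : 0 < w -> on_side w i s -> on_side w i s' -> bpos w s = bpos w s' -> s = s'.
Proof.
  intros hw h h' e.
  destruct i as [|[|[|[|i]]]].
  - rewrite (bpos0 _ _ h), (bpos0 _ _ h') in e; injection e; lra.
  - rewrite (bpos1 _ _ h), (bpos1 _ _ h') in e; injection e; lra.
  - rewrite (bpos2 _ _ hw h), (bpos2 _ _ hw h') in e; injection e; lra.
  - rewrite (bpos3 _ _ hw h), (bpos3 _ _ hw h') in e; injection e; lra.
  - contradiction.
Qed.

Lemma spos_ex w i P : 0 < w -> pt_on w i P -> exists s, on_side w i s /\ bpos w s = P.
Proof.
  intros hw h. destruct P as [X Y].
  destruct i as [|[|[|[|i]]]]; simpl in h.
  - exists X. assert (on_side w 0 X) by (simpl; lra). split; auto. rewrite bpos0; auto. f_equal; lra.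
  - exists (w + Y). assert (on_side w 1 (w+Y)) by (simpl; lra). split; auto. rewrite bpos1; auto. f_equal; lra.
  - exists (2*w+1-X). assert (on_side w 2 (2*w+1-X)) by (simpl; lra). split; auto. rewrite bpos2; auto. f_equal; lra.
  - exists (2*w+2-Y). assert (on_side w 3 (2*w+2-Y)) by (simpl; lra). split; auto. rewrite bpos3; auto. f_equal; lra.
  - contradiction.
Qed.

Lemma pt_on_lt4 w i P : pt_on w i P -> (i < 4)%nat.
Proof. destruct i as [|[|[|[|i]]]]; simpl; intros; try lia; contradiction. Qed.

Lemma pt_on_unique w i j P : 0 < w -> pt_on w i P -> pt_on w j P -> i = j.
Proof.
  intros hw. destruct P as [X Y].
  destruct i as [|[|[|[|i]]]]; destruct j as [|[|[|[|j]]]]; simpl; intros; try lra; try contradiction; reflexivity.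
Qed.

Lemma pt_on_not_interior w i P : pt_on w i P -> ~ Defs.interior w P.
Proof. unfold Defs.interior. destruct P as [X Y]; destruct i as [|[|[|[|i]]]]; simpl; intros; lra. Qed.

Lemma cos_pos_th th : - (PI/2) < th < PI/2 -> 0 < cos th.
Proof. intros h. apply cos_gt_0; lra. Qed.

Lemma dir_eq i th : (i < 4)%nat -> dir i th =
  match i with
  | 0%nat => (- sin th, cos th)
  | 1%nat => (- cos th, - sin th)
  | 2%nat => (sin th, - cos th)
  | _ => (cos th, sin th)
  end.
Proof. intros h; destruct i as [|[|[|[|i]]]]; unfold dir; simpl; try (f_equal; ring); lia. Qed.

Definition refl (j : nat) (D : R * R) : R * R :=
  if Nat.even j then (fst D, - snd D) else (- fst D, snd D).

Lemma reflect_eq j D : (j < 4)%nat -> reflect D (normal j) = refl j D.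
Proof. intros h; destruct D as [a b]; destruct j as [|[|[|[|j]]]]; unfold reflect, refl, vadd, vscal, vdot; simpl; try (f_equal; ring); lia. Qed.

Lemma dir_inj i th th' : (i < 4)%nat -> - (PI/2) < th < PI/2 -> - (PI/2) < th' < PI/2 ->
  dir i th = dir i th' -> th = th'.
Proof.
  intros hi h h' e. rewrite !dir_eq in e by auto.
  apply sin_inj; try lra.
  destruct i as [|[|[|[|i]]]]; injection e; intros; lra.
Qed.

Lemma dir_inward i th : (i < 4)%nat -> - (PI/2) < th < PI/2 -> vdot (dir i th) (normal i) = cos th.
Proof. intros hi h; rewrite dir_eq by auto; destruct i as [|[|[|[|i]]]]; unfold vdot; simpl; try ring; lia. Qed.

Lemma pt_on_rect w i P : 0 < w -> pt_on w i P -> 0 <= fst P <= w /\ 0 <= snd P <= 1.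
Proof. intros hw; destruct P as [X Y]; destruct i as [|[|[|[|i]]]]; simpl; intros; try lra; contradiction. Qed.

Record step (w : R) (x y : R * R) (i j : nat) (t : R) : Prop := {
  st_i : on_side w i (fst x);
  st_j : on_side w j (fst y);
  st_thx : - (PI / 2) < snd x < PI / 2;
  st_thy : - (PI / 2) < snd y < PI / 2;
  st_t : 0 < t;
  st_pos : bpos w (fst y) = vadd (bpos w (fst x)) (vscal t (dir i (snd x)));
  st_int : forall tau, 0 < tau < t -> Defs.interior w (vadd (bpos w (fst x)) (vscal tau (dir i (snd x))));
  st_dir : dir j (snd y) = refl j (dir i (snd x)) }.

Lemma Bill_step w x y : Bill w x y -> exists i j t, step w x y i j t.
Proof.
  intros (i & j & t & h1 & h2 & h3 & h4 & h5 & h6 & h7 & h8).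
  exists i, j, t; constructor; auto; try lra.
  rewrite h8. apply reflect_eq. eapply on_side_lt4; eauto.
Qed.

Lemma step_Bill w x y i j t : step w x y i j t -> Bill w x y.
Proof.
  intros [h1 h2 h3 h4 h5 h6 h7 h8]. exists i, j, t.
  do 7 (split; [auto; lra|]).
  rewrite h8. symmetry; apply reflect_eq. eapply on_side_lt4; eauto.
Qed.

Lemma step_arrive w x y i j t : 0 < w -> step w x y i j t -> vdot (dir i (snd x)) (normal j) < 0.
Proof.
  intros hw [h1 h2 h3 h4 h5 h6 h7 h8].
  pose proof (bpos_on _ _ _ hw h1) as p1. pose proof (bpos_on _ _ _ hw h2) as p2.
  pose proof (cos_pos_th _ h3) as hc.
  assert (hi : (i < 4)%nat) by (eapply on_side_lt4; eauto).
  assert (hj : (j < 4)%nat) by (eapply on_side_lt4; eauto).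
  rewrite h6 in p2. revert p1 p2. rewrite (dir_eq i) by auto.
  destruct (bpos w (fst x)) as [X Y].
  unfold vdot, vadd, vscal; simpl.
  destruct i as [|[|[|[|i]]]]; destruct j as [|[|[|[|j]]]]; simpl; intros; try lia; try nra.
Qed.

Lemma step_ij w x y i j t : 0 < w -> step w x y i j t -> i <> j.
Proof.
  intros hw hs e. subst j. pose proof (step_arrive _ _ _ _ _ _ hw hs) as h.
  destruct hs as [h1 h2 h3 h4 h5 h6 h7 h8].
  rewrite dir_inward in h. pose proof (cos_pos_th _ h3); lra.
  eapply on_side_lt4; eauto. auto.
Qed.

Lemma step_det w x y y' i j t j' t' : 0 < w -> step w x y i j t -> step w x y' i j' t' -> y = y'.
Proof.
  intros hw hs hs'.
  assert (tt : t = t').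
  { destruct (Rtotal_order t t') as [l|[e|l]]; auto; exfalso.
    - pose proof (st_int _ _ _ _ _ _ hs' t (conj (st_t _ _ _ _ _ _ hs) l)) as hin.
      rewrite <- (st_pos _ _ _ _ _ _ hs) in hin.
      eapply pt_on_not_interior; [|exact hin]. apply bpos_on; auto. exact (st_j _ _ _ _ _ _ hs).
    - pose proof (st_int _ _ _ _ _ _ hs t' (conj (st_t _ _ _ _ _ _ hs') l)) as hin.
      rewrite <- (st_pos _ _ _ _ _ _ hs') in hin.
      eapply pt_on_not_interior; [|exact hin]. apply bpos_on; auto. exact (st_j _ _ _ _ _ _ hs'). }
  subst t'.
  assert (ep : bpos w (fst y) = bpos w (fst y')) by (rewrite (st_pos _ _ _ _ _ _ hs), (st_pos _ _ _ _ _ _ hs'); auto).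
  assert (jj : j = j').
  { eapply pt_on_unique; eauto. apply bpos_on; auto. exact (st_j _ _ _ _ _ _ hs).
    rewrite ep. apply bpos_on; auto. exact (st_j _ _ _ _ _ _ hs'). }
  subst j'.
  assert (es : fst y = fst y') by (eapply bpos_inj; eauto; [exact (st_j _ _ _ _ _ _ hs)|exact (st_j _ _ _ _ _ _ hs')]).
  assert (eth : snd y = snd y').
  { eapply dir_inj. eapply on_side_lt4; exact (st_j _ _ _ _ _ _ hs).
    exact (st_thy _ _ _ _ _ _ hs). exact (st_thy _ _ _ _ _ _ hs').
    rewrite (st_dir _ _ _ _ _ _ hs), (st_dir _ _ _ _ _ _ hs'). auto. }
  destruct y, y'; simpl in *; subst; auto.
Qed.

Lemma Bill_det w x y y' : 0 < w -> Bill w x y -> Bill w x y' -> y = y'.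
Proof.
  intros hw h h'. apply Bill_step in h as (i & j & t & hs). apply Bill_step in h' as (i' & j' & t' & hs').
  assert (i = i') by (eapply on_side_unique; eauto; [exact (st_i _ _ _ _ _ _ hs)|exact (st_i _ _ _ _ _ _ hs')]).
  subst; eapply step_det; eauto.
Qed.

Lemma step_mag w x y i j t : step w x y i j t ->
  Rabs (fst (dir j (snd y))) = Rabs (fst (dir i (snd x))) /\
  Rabs (snd (dir j (snd y))) = Rabs (snd (dir i (snd x))).
Proof.
  intros hs. rewrite (st_dir _ _ _ _ _ _ hs). unfold refl.
  destruct (Nat.even j); simpl; split; try rewrite Rabs_Ropp; auto.
Qed.

Lemma step_arrive_comp w x y i j t : 0 < w -> step w x y i j t ->
  match j with
  | 0%nat => snd (dir i (snd x)) < 0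
  | 1%nat => 0 < fst (dir i (snd x))
  | 2%nat => 0 < snd (dir i (snd x))
  | _ => fst (dir i (snd x)) < 0
  end.
Proof.
  intros hw hs. pose proof (step_arrive _ _ _ _ _ _ hw hs) as h.
  assert (hj : (j < 4)%nat) by (eapply on_side_lt4; exact (st_j _ _ _ _ _ _ hs)).
  destruct (dir i (snd x)) as [a b]; unfold vdot in h; simpl in *.
  destruct j as [|[|[|[|j]]]]; simpl in *; try lia; lra.
Qed.

Lemma cv_inv_succ : Un_cv (fun m => / (INR m + 1)) 0.
Proof.
  intros eps heps.
  destruct (archimed (/ eps)) as [h1 _].
  assert (0 <= IZR (up (/eps))) by (pose proof (Rinv_0_lt_compat _ heps); lra).
  destruct (up (/ eps)) as [|p|p] eqn:E; [| |simpl in *; pose proof (IZR_lt _ _ (Pos2Z.neg_is_neg p)); lra].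
  - exists 0%nat. intros n _. unfold Rdist. rewrite Rminus_0_r.
    rewrite Rabs_pos_eq by (left; apply Rinv_0_lt_compat; pose proof (pos_INR n); lra).
    apply Rinv_0_lt_compat in heps. simpl in h1. exfalso; lra.
  - exists (Pos.to_nat p). intros n hn. unfold Rdist. rewrite Rminus_0_r.
    assert (hn' : IZR (Z.pos p) <= INR n) by (rewrite <- Znat.positive_nat_Z, <- INR_IZR_INZ; apply le_INR; lia).
    rewrite Rabs_pos_eq by (left; apply Rinv_0_lt_compat; pose proof (pos_INR n); lra).
    rewrite <- (Rinv_inv eps). apply Rinv_lt_contravar.
    apply Rmult_lt_0_compat. apply Rinv_0_lt_compat; lra. pose proof (pos_INR n); lra. lra.
Qed.

Lemma cv_lam_plus : Un_cv (fun m => 1 + / (INR m + 1)) 1.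
Proof.
  intros eps heps. destruct (cv_inv_succ eps heps) as [N hN]. exists N. intros n hn.
  specialize (hN n hn). unfold Rdist in *. replace (1 + / (INR n + 1) - 1) with (/ (INR n + 1) - 0) by ring. auto.
Qed.

Lemma cv_lam_minus : Un_cv (fun m => 1 - / (INR m + 2)) 1.
Proof.
  intros eps heps. destruct (cv_inv_succ eps heps) as [N hN]. exists N. intros n hn.
  specialize (hN (S n) ltac:(lia)). unfold Rdist in *. rewrite S_INR in hN.
  replace (1 - / (INR n + 2) - 1) with (- (/ (INR n + 1 + 1) - 0)) by (replace (INR n + 1 + 1) with (INR n + 2) by ring; ring).
  rewrite Rabs_Ropp; auto.
Qed.

Lemma stable_of_zero w n itin q : is_cyl w n itin -> in_cyl w n itin q ->
  (forall k, (k < n)%nat -> snd (q k) = 0) -> lam_stable_cyl w n itin.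
Proof.
  intros hc hq hz.
  assert (hz' : forall k, (k < n)%nat -> snd (q (S k)) = 0).
  { intros k hk. destruct (Nat.eq_dec (S k) n) as [e|ne].
    - rewrite e. destruct hq as (_ & _ & e0 & _). rewrite e0. apply hz. lia.
    - apply hz; lia. }
  assert (horb : forall l, 0 < l -> is_orbit w (PhiL w l) n itin q).
  { intros l hl. destruct hq as (h1 & h2 & h3 & h4). repeat split; auto.
    intros k hk. exists (q (S k)). split; auto. pose proof (hz' k hk) as e.
    destruct (q (S k)) as [a b]; simpl in *; subst b. rewrite Rmult_0_r.
    split; auto. pose proof PI_RGT_0; lra. }
  split; auto. split.
  - exists q; split; auto. exists (fun m => 1 + / (INR m + 1)), (fun _ => q).
    split; [|split; [apply cv_lam_plus|split]].
    + intros m. rewrite S_INR. apply Rplus_lt_compat_l. apply Rinv_lt_contravar.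
      pose proof (pos_INR m); nra. lra.
    + intros m; apply horb. pose proof (pos_INR m). pose proof (Rinv_0_lt_compat (INR m + 1) ltac:(lra)); lra.
    + intros k _; split; intros e he; exists 0%nat; intros; unfold Rdist; rewrite Rminus_diag, Rabs_R0; auto.
  - exists q; split; auto. exists (fun m => 1 - / (INR m + 2)), (fun _ => q).
    assert (hb : forall m, / (INR m + 2) < 1).
    { intros m. pose proof (pos_INR m). rewrite <- Rinv_1. apply Rinv_lt_contravar; lra. }
    split; [|split; [|split; [apply cv_lam_minus|split]]].
    + intros m; specialize (hb m); lra.
    + intros m. rewrite S_INR. apply Rplus_lt_compat_l. apply Ropp_lt_contravar. apply Rinv_lt_contravar.
      pose proof (pos_INR m); nra. lra.
    + intros m; apply horb. specialize (hb m); lra.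
    + intros k _; split; intros e he; exists 0%nat; intros; unfold Rdist; rewrite Rminus_diag, Rabs_R0; auto.
Qed.

Definition ppv (w : R) (k : nat) : R * R := if Nat.even k then (w/2, 0) else (3*w/2+1, 0).
Definition pph (w : R) (k : nat) : R * R := if Nat.even k then (w + /2, 0) else (2*w+2 - /2, 0).

Lemma pi2_pos : - (PI/2) < 0 < PI/2.
Proof. pose proof PI_RGT_0; lra. Qed.

Lemma ppv_step02 w : 0 < w -> Bill w (w/2, 0) (3*w/2+1, 0).
Proof.
  intros hw. apply (step_Bill _ _ _ 0 2 1). constructor; simpl; try lra; try apply pi2_pos.
  - rewrite bpos2 by (simpl; lra). rewrite bpos0 by (simpl; lra). rewrite dir_eq by lia.
    rewrite sin_0, cos_0. unfold vadd, vscal; simpl; f_equal; lra.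
  - intros tau ht. rewrite bpos0 by (simpl; lra). rewrite dir_eq by lia. rewrite sin_0, cos_0.
    unfold Defs.interior, vadd, vscal; simpl; lra.
  - rewrite !dir_eq by lia. rewrite sin_0, cos_0. unfold refl; simpl; f_equal; lra.
Qed.

Lemma ppv_step20 w : 0 < w -> Bill w (3*w/2+1, 0) (w/2, 0).
Proof.
  intros hw. apply (step_Bill _ _ _ 2 0 1). constructor; simpl; try lra; try apply pi2_pos.
  - rewrite (bpos2 w (3*w/2+1)) by (simpl; lra). rewrite (bpos0 w (w/2)) by (simpl; lra). rewrite dir_eq by lia.
    rewrite sin_0, cos_0. unfold vadd, vscal; simpl; f_equal; lra.
  - intros tau ht. rewrite bpos2 by (simpl; lra). rewrite dir_eq by lia. rewrite sin_0, cos_0.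
    unfold Defs.interior, vadd, vscal; simpl; lra.
  - rewrite !dir_eq by lia. rewrite sin_0, cos_0. unfold refl; simpl; f_equal; lra.
Qed.

Lemma pph_step13 w : 0 < w -> Bill w (w + /2, 0) (2*w+2 - /2, 0).
Proof.
  intros hw. apply (step_Bill _ _ _ 1 3 w). constructor; simpl; try lra; try apply pi2_pos.
  - rewrite (bpos1 w (w + /2)) by (simpl; lra). rewrite (bpos3 w (2*w+2 - /2)) by (simpl; lra). rewrite dir_eq by lia.
    rewrite sin_0, cos_0. unfold vadd, vscal; simpl; f_equal; lra.
  - intros tau ht. rewrite bpos1 by (simpl; lra). rewrite dir_eq by lia. rewrite sin_0, cos_0.
    unfold Defs.interior, vadd, vscal; simpl; lra.
  - rewrite !dir_eq by lia. rewrite sin_0, cos_0. unfold refl; simpl; f_equal; lra.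
Qed.

Lemma pph_step31 w : 0 < w -> Bill w (2*w+2 - /2, 0) (w + /2, 0).
Proof.
  intros hw. apply (step_Bill _ _ _ 3 1 w). constructor; simpl; try lra; try apply pi2_pos.
  - rewrite (bpos1 w (w + /2)) by (simpl; lra). rewrite (bpos3 w (2*w+2 - /2)) by (simpl; lra). rewrite dir_eq by lia.
    rewrite sin_0, cos_0. unfold vadd, vscal; simpl; f_equal; lra.
  - intros tau ht. rewrite bpos3 by (simpl; lra). rewrite dir_eq by lia. rewrite sin_0, cos_0.
    unfold Defs.interior, vadd, vscal; simpl; lra.
  - rewrite !dir_eq by lia. rewrite sin_0, cos_0. unfold refl; simpl; f_equal; lra.
Qed.

Lemma part1 w : 0 < w -> lam_stable_cyl w 2 (fun k => if Nat.even k then 0%nat else 2%nat).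
Proof.
  intros hw.
  assert (hq : in_cyl w 2 (fun k => if Nat.even k then 0%nat else 2%nat) (ppv w)).
  { unfold in_cyl, is_orbit, ppv. split; [lia|split; [|split]].
    - intros k hk. destruct k as [|[|k]]; simpl; [apply ppv_step02|apply ppv_step20|lia]; auto.
    - reflexivity.
    - intros k hk. destruct k as [|[|k]]; simpl; try lia; lra. }
  apply (stable_of_zero _ _ _ (ppv w)); auto.
  - exists (ppv w); split; auto. intros k h1 h2. destruct k as [|[|k]]; try lia.
    unfold ppv; simpl. intros e; injection e; lra.
  - intros k hk. unfold ppv. destruct (Nat.even k); reflexivity.
Qed.

Lemma part2 w : 0 < w -> lam_stable_cyl w 2 (fun k => if Nat.even k then 1%nat else 3%nat).
Proof.
  intros hw.
  assert (hq : in_cyl w 2 (fun k => if Nat.even k then 1%nat else 3%nat) (pph w)).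
  { unfold in_cyl, is_orbit, pph. split; [lia|split; [|split]].
    - intros k hk. destruct k as [|[|k]]; simpl; [apply pph_step13|apply pph_step31|lia]; auto.
    - reflexivity.
    - intros k hk. destruct k as [|[|k]]; simpl; try lia; lra. }
  apply (stable_of_zero _ _ _ (pph w)); auto.
  - exists (pph w); split; auto. intros k h1 h2. destruct k as [|[|k]]; try lia.
    unfold pph; simpl. intros e; injection e; lra.
  - intros k hk. unfold pph. destruct (Nat.even k); reflexivity.
Qed.

Fixpoint sumR (f : nat -> R) (n : nat) : R :=
  match n with O => 0 | S m => sumR f m + f m end.

Lemma sumR_ext f g n : (forall k, (k < n)%nat -> f k = g k) -> sumR f n = sumR g n.
Proof. induction n; simpl; intros h; auto. rewrite IHn by (intros; apply h; lia). rewrite h by lia; auto. Qed.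

Lemma sumR_plus f g n : sumR (fun k => f k + g k) n = sumR f n + sumR g n.
Proof. induction n; simpl; [ring|rewrite IHn; ring]. Qed.

Lemma sumR_scal c f n : sumR (fun k => c * f k) n = c * sumR f n.
Proof. induction n; simpl; [ring|rewrite IHn; ring]. Qed.

Lemma sumR_tele g n : sumR (fun k => g (S k) - g k) n = g n - g O.
Proof. induction n; simpl; [ring|rewrite IHn; ring]. Qed.

Lemma sumR_shift g n : sumR (fun k => g (S k)) n = sumR g n + g n - g O.
Proof. induction n; simpl; [ring|rewrite IHn; ring]. Qed.

Lemma sumR_const c n : sumR (fun _ => c) n = INR n * c.
Proof. induction n; simpl sumR; [simpl; ring|rewrite IHn, S_INR; ring]. Qed.

Lemma sumR_nonneg f n : (forall k, (k < n)%nat -> 0 <= f k) -> 0 <= sumR f n.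
Proof. induction n; simpl; intros h; [lra|]. pose proof (h n ltac:(lia)). pose proof (IHn ltac:(intros; apply h; lia)). lra. Qed.

Lemma sumR_zero_nonneg f n : (forall k, (k < n)%nat -> 0 <= f k) -> sumR f n = 0 ->
  forall k, (k < n)%nat -> f k = 0.
Proof.
  induction n; simpl; intros h e k hk; [lia|].
  pose proof (h n ltac:(lia)). pose proof (sumR_nonneg f n ltac:(intros; apply h; lia)).
  destruct (Nat.eq_dec k n); [subst; lra|]. apply IHn; try lra. intros; apply h; lia. lia.
Qed.

Lemma sumR_cv (u : nat -> nat -> R) (l : nat -> R) n :
  (forall k, (k < n)%nat -> Un_cv (fun m => u m k) (l k)) ->
  Un_cv (fun m => sumR (u m) n) (sumR l n).
Proof.
  induction n; simpl; intros h.
  - intros e he; exists 0%nat; intros; unfold Rdist; rewrite Rminus_diag, Rabs_R0; auto.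
  - apply CV_plus. apply IHn; intros; apply h; lia. apply h; lia.
Qed.

Fixpoint cnt (p : nat -> bool) (n : nat) : nat :=
  match n with O => O | S m => (cnt p m + if p m then 1 else 0)%nat end.

Lemma cnt_INR p n : INR (cnt p n) = sumR (fun k => if p k then 1 else 0) n.
Proof. induction n; simpl; auto. rewrite plus_INR, IHn. destruct (p n); simpl; ring. Qed.

Lemma cnt_zero p n : cnt p n = O -> forall k, (k < n)%nat -> p k = false.
Proof. induction n; simpl; intros h k hk; [lia|]. destruct (p n) eqn:E; [lia|].
  destruct (Nat.eq_dec k n); [subst; auto|]. apply IHn; lia. Qed.

Lemma cnt_split p n : (cnt p n + cnt (fun k => negb (p k)) n)%nat = n.
Proof. induction n; simpl; auto. destruct (p n); simpl; lia. Qed.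

Definition sd (n : nat) (itin : nat -> nat) (k : nat) : nat := if (k <? n)%nat then itin k else itin O.

Lemma orbit_side w F n itin q : is_orbit w F n itin q -> forall k, (k <= n)%nat -> on_side w (sd n itin k) (fst (q k)).
Proof.
  intros (h0 & h1 & h2 & h3) k hk. unfold sd. destruct (Nat.ltb_spec k n).
  - apply h3; auto.
  - assert (k = n) by lia. subst. rewrite h2. apply h3; auto.
Qed.

Lemma orbit_step w n itin q : 0 < w -> in_cyl w n itin q -> forall k, (k < n)%nat ->
  exists t, step w (q k) (q (S k)) (sd n itin k) (sd n itin (S k)) t.
Proof.
  intros hw hq k hk. pose proof hq as (h0 & h1 & h2 & h3).
  destruct (Bill_step _ _ _ (h1 k hk)) as (i & j & t & hs). exists t.
  pose proof (orbit_side _ _ _ _ _ hq k ltac:(lia)) as s1.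
  pose proof (orbit_side _ _ _ _ _ hq (S k) ltac:(lia)) as s2.
  rewrite <- (on_side_unique _ _ _ _ hw (st_i _ _ _ _ _ _ hs) s1).
  rewrite <- (on_side_unique _ _ _ _ hw (st_j _ _ _ _ _ _ hs) s2). auto.
Qed.

Lemma orbitL_step w l n itin q : 0 < w -> is_orbit w (PhiL w l) n itin q -> forall k, (k < n)%nat ->
  exists z t, step w (q k) z (sd n itin k) (sd n itin (S k)) t /\ q (S k) = (fst z, l * snd z).
Proof.
  intros hw hq k hk. pose proof hq as (h0 & h1 & h2 & h3).
  destruct (h1 k hk) as (z & hb & ez & _).
  destruct (Bill_step _ _ _ hb) as (i & j & t & hs). exists z, t. split; auto.
  pose proof (orbit_side _ _ _ _ _ hq k ltac:(lia)) as s1.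
  pose proof (orbit_side _ _ _ _ _ hq (S k) ltac:(lia)) as s2.
  rewrite ez in s2; simpl in s2.
  rewrite <- (on_side_unique _ _ _ _ hw (st_i _ _ _ _ _ _ hs) s1).
  rewrite <- (on_side_unique _ _ _ _ hw (st_j _ _ _ _ _ _ hs) s2). auto.
Qed.

Lemma abs_sin th : - (PI/2) < th < PI/2 -> Rabs (sin th) = sin (Rabs th).
Proof.
  intros h. destruct (Rle_dec 0 th).
  - rewrite !Rabs_pos_eq; auto. apply sin_ge_0; lra.
  - rewrite (Rabs_left th) by lra. rewrite sin_neg. rewrite Rabs_left; auto.
    apply sin_lt_0_var; lra.
Qed.

Lemma cos_abs th : cos th = cos (Rabs th).
Proof. destruct (Rle_dec 0 th); [rewrite Rabs_pos_eq; auto|rewrite Rabs_left, cos_neg; auto; lra]. Qed.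

Lemma abs_range th : - (PI/2) < th < PI/2 -> 0 <= Rabs th < PI/2.
Proof. intros h; split; [apply Rabs_pos|]. unfold Rabs; destruct (Rcase_abs th); lra. Qed.

Definition mx (i : nat) (th : R) : R := if Nat.even i then Rabs (sin th) else cos th.
Definition my (i : nat) (th : R) : R := if Nat.even i then cos th else Rabs (sin th).

Lemma mx_eq i th : (i < 4)%nat -> - (PI/2) < th < PI/2 -> Rabs (fst (dir i th)) = mx i th.
Proof.
  intros hi h. pose proof (cos_pos_th _ h). rewrite dir_eq by auto. unfold mx.
  destruct i as [|[|[|[|i]]]]; simpl; try lia; rewrite ?Rabs_Ropp; auto; apply Rabs_pos_eq; lra.
Qed.

Lemma my_eq i th : (i < 4)%nat -> - (PI/2) < th < PI/2 -> Rabs (snd (dir i th)) = my i th.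
Proof.
  intros hi h. pose proof (cos_pos_th _ h). rewrite dir_eq by auto. unfold my.
  destruct i as [|[|[|[|i]]]]; simpl; try lia; rewrite ?Rabs_Ropp; auto; apply Rabs_pos_eq; lra.
Qed.

Definition bet (i : nat) (th : R) : R := if Nat.even i then PI/2 - Rabs th else Rabs th.

Lemma step_abs w x y i j t : step w x y i j t ->
  bet j (snd y) = bet i (snd x).
Proof.
  intros hs. pose proof (step_mag _ _ _ _ _ _ hs) as [e1 e2].
  pose proof (st_thx _ _ _ _ _ _ hs) as hx. pose proof (st_thy _ _ _ _ _ _ hs) as hy.
  assert (hi : (i < 4)%nat) by (eapply on_side_lt4; exact (st_i _ _ _ _ _ _ hs)).
  assert (hj : (j < 4)%nat) by (eapply on_side_lt4; exact (st_j _ _ _ _ _ _ hs)).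
  rewrite !mx_eq in e1 by auto. rewrite !my_eq in e2 by auto.
  unfold mx, my, bet in *.
  pose proof (abs_range _ hx). pose proof (abs_range _ hy).
  rewrite (abs_sin _ hx), (abs_sin _ hy) in *. rewrite (cos_abs (snd x)), (cos_abs (snd y)) in *.
  rewrite <- (sin_shift (Rabs (snd x))), <- (sin_shift (Rabs (snd y))) in *.
  destruct (Nat.even i); destruct (Nat.even j).
  - assert (Rabs (snd y) = Rabs (snd x)) by (apply sin_inj; lra). lra.
  - assert (Rabs (snd y) = PI/2 - Rabs (snd x)) by (apply sin_inj; lra). lra.
  - assert (Rabs (snd y) = PI/2 - Rabs (snd x)) by (apply sin_inj; lra). lra.
  - assert (Rabs (snd y) = Rabs (snd x)) by (apply sin_inj; lra). lra.
Qed.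

Definition sg (i : nat) : R := if Nat.even i then 1 else -1.

Lemma sd_lt n itin k : (k < n)%nat -> sd n itin k = itin k.
Proof. intros h; unfold sd; destruct (Nat.ltb_spec k n); auto; lia. Qed.
Lemma sd_n n itin : sd n itin n = itin O.
Proof. unfold sd; destruct (Nat.ltb_spec n n); auto; lia. Qed.
Lemma sd_0 n itin : (0 < n)%nat -> sd n itin O = itin O.
Proof. intros; apply sd_lt; auto. Qed.

Lemma phil_sum w l n itin r : 0 < w -> 0 < l -> l <> 1 -> is_orbit w (PhiL w l) n itin r ->
  sumR (fun k => sg (itin k) * Rabs (snd (r k))) n = 0.
Proof.
  intros hw hl hl1 hr.
  pose proof hr as (h0 & h1 & h2 & h3).
  set (g := fun k => sg (sd n itin k) * Rabs (snd (r k))).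
  set (B := fun k => bet (sd n itin k) (snd (r k))).
  assert (key : forall k, (k < n)%nat -> B (S k) - B k = (1 - l) / l * g (S k)).
  { intros k hk. destruct (orbitL_step _ _ _ _ _ hw hr k hk) as (z & t & hs & ez).
    pose proof (step_abs _ _ _ _ _ _ hs) as eb. unfold B, g. rewrite <- eb, ez. cbn [fst snd].
    unfold bet, sg. rewrite !Rabs_mult, (Rabs_pos_eq l) by lra.
    destruct (Nat.even (sd n itin (S k))); field; lra. }
  assert (e1 : sumR (fun k => B (S k) - B k) n = 0).
  { rewrite sumR_tele. unfold B. rewrite sd_n, sd_0, h2 by auto. ring. }
  rewrite (sumR_ext _ (fun k => (1 - l)/l * g (S k))) in e1 by auto.
  rewrite sumR_scal in e1.
  assert (e2 : sumR (fun k => g (S k)) n = 0).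
  { apply Rmult_integral in e1. destruct e1 as [e|e]; auto. exfalso.
    assert ((1 - l) / l <> 0). { unfold Rdiv. apply Rmult_integral_contrapositive; split; [lra|].
      apply Rinv_neq_0_compat; lra. } auto. }
  rewrite sumR_shift in e2. unfold g at 2 3 in e2. rewrite sd_n, sd_0, h2 in e2 by auto.
  rewrite <- (sumR_ext g). lra. intros k hk; unfold g; rewrite sd_lt; auto.
Qed.

Lemma decr_gt1 (lam : nat -> R) : (forall m, lam (S m) < lam m) -> Un_cv lam 1 -> forall m, 1 < lam m.
Proof.
  intros hd hc m. destruct (Rlt_dec 1 (lam m)) as [h|h]; auto. exfalso.
  assert (mono : forall j, lam (j + S m)%nat <= lam (S m)).
  { induction j; simpl; [lra|]. pose proof (hd (j + S m)%nat). lra. }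
  pose proof (hd m).
  destruct (hc (1 - lam (S m)) ltac:(lra)) as [N hN].
  specialize (hN (N + S m)%nat ltac:(lia)). specialize (mono N).
  unfold Rdist in hN. rewrite Rabs_left in hN by lra. lra.
Qed.

Lemma incr_lt1 (lam : nat -> R) : (forall m, lam m < lam (S m)) -> Un_cv lam 1 -> forall m, lam m < 1.
Proof.
  intros hd hc m. destruct (Rlt_dec (lam m) 1) as [h|h]; auto. exfalso.
  assert (mono : forall j, lam (S m) <= lam (j + S m)%nat).
  { induction j; simpl; [lra|]. pose proof (hd (j + S m)%nat). lra. }
  pose proof (hd m).
  destruct (hc (lam (S m) - 1) ltac:(lra)) as [N hN].
  specialize (hN (N + S m)%nat ltac:(lia)). specialize (mono N).
  unfold Rdist in hN. rewrite Rabs_right in hN by lra. lra.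
Qed.

Lemma plus_sum w n itin q : 0 < w -> lam_plus_stable w n itin q ->
  sumR (fun k => sg (itin k) * Rabs (snd (q k))) n = 0.
Proof.
  intros hw (lam & qs & hd & hc & ho & hcv).
  pose proof (decr_gt1 _ hd hc) as hg.
  assert (hz : forall m, sumR (fun k => sg (itin k) * Rabs (snd (qs m k))) n = 0).
  { intros m. apply (phil_sum w (lam m)); auto. specialize (hg m); lra. specialize (hg m); lra. }
  assert (hcv2 : Un_cv (fun m => sumR (fun k => sg (itin k) * Rabs (snd (qs m k))) n)
                   (sumR (fun k => sg (itin k) * Rabs (snd (q k))) n)).
  { apply (sumR_cv (fun m k => sg (itin k) * Rabs (snd (qs m k)))). intros k hk.
    apply CV_mult. intros e he; exists 0%nat; intros; unfold Rdist; rewrite Rminus_diag, Rabs_R0; auto.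
    apply cv_cvabs. apply hcv; auto. }
  apply (UL_sequence _ _ _ hcv2). intros e he; exists 0%nat; intros j _. rewrite hz. unfold Rdist; rewrite Rminus_diag, Rabs_R0; auto.
Qed.

Definition ux (w : R) (P D : R * R) : R := if Rlt_dec 0 (fst D) then fst P else w - fst P.
Definition uy (P D : R * R) : R := if Rlt_dec 0 (snd D) then snd P else 1 - snd P.

Lemma step_close w x y i j t : 0 < w -> step w x y i j t ->
  t * Rabs (fst (dir i (snd x))) =
    ux w (bpos w (fst y)) (dir j (snd y)) - ux w (bpos w (fst x)) (dir i (snd x)) + (if Nat.even j then 0 else w) /\
  t * Rabs (snd (dir i (snd x))) =
    uy (bpos w (fst y)) (dir j (snd y)) - uy (bpos w (fst x)) (dir i (snd x)) + (if Nat.even j then 1 else 0).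
Proof.
  intros hw hs.
  pose proof (step_arrive_comp _ _ _ _ _ _ hw hs) as har.
  pose proof (bpos_on _ _ _ hw (st_j _ _ _ _ _ _ hs)) as p2.
  pose proof (pt_on_rect _ _ _ hw (bpos_on _ _ _ hw (st_i _ _ _ _ _ _ hs))) as p1.
  pose proof (st_t _ _ _ _ _ _ hs) as ht.
  rewrite (st_dir _ _ _ _ _ _ hs). rewrite (st_pos _ _ _ _ _ _ hs) in *.
  assert (hj : (j < 4)%nat) by (eapply on_side_lt4; exact (st_j _ _ _ _ _ _ hs)).
  destruct (dir i (snd x)) as [a b]. destruct (bpos w (fst x)) as [X Y].
  unfold ux, uy, refl, vadd, vscal in *; simpl in *.
  destruct j as [|[|[|[|j]]]]; simpl in *; try lia.
  - destruct (Rlt_dec 0 a); destruct (Rlt_dec 0 b); destruct (Rlt_dec 0 (-b)); try lra;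
    split; [rewrite Rabs_pos_eq by lra|rewrite Rabs_left by lra|rewrite Rabs_left1 by lra|rewrite Rabs_left by lra]; try lra.
    all: try (rewrite Rabs_left1 by lra; lra).
  - destruct (Rlt_dec 0 a); destruct (Rlt_dec 0 (-a)); destruct (Rlt_dec 0 b); try lra;
    split; try (rewrite Rabs_pos_eq by lra; lra); try (rewrite Rabs_left by lra; lra); try (rewrite Rabs_left1 by lra; lra).
  - destruct (Rlt_dec 0 a); destruct (Rlt_dec 0 b); destruct (Rlt_dec 0 (-b)); try lra;
    split; try (rewrite Rabs_pos_eq by lra; lra); try (rewrite Rabs_left by lra; lra); try (rewrite Rabs_left1 by lra; lra).
  - destruct (Rlt_dec 0 a); destruct (Rlt_dec 0 (-a)); destruct (Rlt_dec 0 b); try lra;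
    split; try (rewrite Rabs_pos_eq by lra; lra); try (rewrite Rabs_left by lra; lra); try (rewrite Rabs_left1 by lra; lra).
Qed.

Section Orbit.
Variables (w : R) (n : nat) (itin : nat -> nat) (q : nat -> R * R).
Hypothesis hw : 0 < w.
Hypothesis hq : in_cyl w n itin q.

Definition Dk (k : nat) : R * R := dir (sd n itin k) (snd (q k)).
Definition Pk (k : nat) : R * R := bpos w (fst (q k)).

Lemma orb_bet : forall k, (k <= n)%nat -> bet (sd n itin k) (snd (q k)) = bet (sd n itin O) (snd (q O)).
Proof.
  induction k; intros hk; auto. destruct (orbit_step _ _ _ _ hw hq k ltac:(lia)) as [t hs].
  rewrite (step_abs _ _ _ _ _ _ hs). apply IHk; lia.
Qed.

Lemma orb_mag : forall k, (k <= n)%nat -> Rabs (fst (Dk k)) = Rabs (fst (Dk O)) /\ Rabs (snd (Dk k)) = Rabs (snd (Dk O)).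
Proof.
  induction k; intros hk; auto. destruct (orbit_step _ _ _ _ hw hq k ltac:(lia)) as [t hs].
  destruct (step_mag _ _ _ _ _ _ hs) as [e1 e2]. unfold Dk in *. rewrite e1, e2. apply IHk; lia.
Qed.

Definition oddb (i : nat) : bool := negb (Nat.even i).

Lemma orb_n0 : (0 < n)%nat.
Proof. destruct hq; auto. Qed.

Lemma orb_cnt_shift (p : nat -> bool) :
  sumR (fun k => if p (sd n itin (S k)) then 1 else 0) n = INR (cnt (fun k => p (itin k)) n).
Proof.
  rewrite cnt_INR. rewrite (sumR_shift (fun k => if p (sd n itin k) then 1 else 0)).
  rewrite sd_n, sd_0 by apply orb_n0.
  replace (sumR (fun k : nat => if p (sd n itin k) then 1 else 0) n) with (sumR (fun k => if p (itin k) then 1 else 0) n).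
  ring. apply sumR_ext. intros k hk; rewrite sd_lt; auto.
Qed.

Definition Hc : R := INR (cnt (fun k => Nat.even (itin k)) n).
Definition Vc : R := INR (cnt (fun k => oddb (itin k)) n).

Lemma orb_close : w * Vc * Rabs (snd (Dk O)) = Hc * Rabs (fst (Dk O)).
Proof.
  set (a := Rabs (fst (Dk O))). set (b := Rabs (snd (Dk O))).
  set (U := fun k => ux w (Pk k) (Dk k)). set (W := fun k => uy (Pk k) (Dk k)).
  assert (key : forall k, (k < n)%nat ->
     (U (S k) - U k + (if oddb (sd n itin (S k)) then w else 0)) * b =
     (W (S k) - W k + (if Nat.even (sd n itin (S k)) then 1 else 0)) * a).
  { intros k hk. destruct (orbit_step _ _ _ _ hw hq k hk) as [t hs].
    destruct (step_close _ _ _ _ _ _ hw hs) as [e1 e2].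
    destruct (orb_mag k ltac:(lia)) as [m1 m2].
    change (dir (sd n itin k) (snd (q k))) with (Dk k) in e1, e2.
    change (dir (sd n itin (S k)) (snd (q (S k)))) with (Dk (S k)) in e1, e2.
    change (bpos w (fst (q k))) with (Pk k) in e1, e2.
    change (bpos w (fst (q (S k)))) with (Pk (S k)) in e1, e2.
    rewrite m1 in e1. rewrite m2 in e2. fold a in e1. fold b in e2. clearbody a b.
    unfold U, W, oddb. destruct (Nat.even (sd n itin (S k))); cbn [negb] in *; rewrite <- ?e1, <- ?e2; ring. }
  assert (eU : sumR (fun k => U (S k) - U k) n = 0).
  { rewrite sumR_tele. unfold U, Pk, Dk. rewrite sd_n, sd_0 by apply orb_n0. destruct hq as (_&_&e&_). rewrite e. ring. }
  assert (eW : sumR (fun k => W (S k) - W k) n = 0).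
  { rewrite sumR_tele. unfold W, Pk, Dk. rewrite sd_n, sd_0 by apply orb_n0. destruct hq as (_&_&e&_). rewrite e. ring. }
  pose proof (sumR_ext _ _ n key) as es.
  rewrite (sumR_ext (fun k => (U (S k) - U k + (if oddb (sd n itin (S k)) then w else 0)) * b)
     (fun k => b * (U (S k) - U k) + (b * w) * (if oddb (sd n itin (S k)) then 1 else 0))) in es
    by (intros; destruct (oddb _); ring).
  rewrite (sumR_ext (fun k => (W (S k) - W k + (if Nat.even (sd n itin (S k)) then 1 else 0)) * a)
     (fun k => a * (W (S k) - W k) + a * (if Nat.even (sd n itin (S k)) then 1 else 0))) in es
    by (intros; destruct (Nat.even _); ring).
  rewrite !sumR_plus, !sumR_scal, eU, eW in es.
  rewrite (orb_cnt_shift oddb), (orb_cnt_shift Nat.even) in es.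
  unfold Hc, Vc. lra.
Qed.

Lemma orb_V0 : cnt (fun k => oddb (itin k)) n = O -> Rabs (fst (Dk O)) = 0.
Proof.
  intros h0.
  set (a := Rabs (fst (Dk O))). set (U := fun k => ux w (Pk k) (Dk k)).
  assert (key : forall k, (k < n)%nat -> exists t, 0 < t /\ U (S k) - U k = t * a).
  { intros k hk. destruct (orbit_step _ _ _ _ hw hq k hk) as [t hs].
    destruct (step_close _ _ _ _ _ _ hw hs) as [e1 e2].
    destruct (orb_mag k ltac:(lia)) as [m1 m2].
    change (dir (sd n itin k) (snd (q k))) with (Dk k) in e1, e2.
    change (dir (sd n itin (S k)) (snd (q (S k)))) with (Dk (S k)) in e1, e2.
    change (bpos w (fst (q k))) with (Pk k) in e1, e2.
    change (bpos w (fst (q (S k)))) with (Pk (S k)) in e1, e2.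
    rewrite m1 in e1. fold a in e1.
    exists t. split. exact (st_t _ _ _ _ _ _ hs).
    assert (ho : oddb (sd n itin (S k)) = false).
    { destruct (Nat.eq_dec (S k) n) as [e|ne].
      - rewrite e, sd_n. apply (cnt_zero _ _ h0). apply orb_n0.
      - rewrite sd_lt by lia. apply (cnt_zero _ _ h0). lia. }
    unfold oddb in ho. destruct (Nat.even (sd n itin (S k))); simpl in ho; try discriminate.
    unfold U. lra. }
  assert (eU : sumR (fun k => U (S k) - U k) n = 0).
  { rewrite sumR_tele. unfold U, Pk, Dk. rewrite sd_n, sd_0 by apply orb_n0. destruct hq as (_&_&e&_). rewrite e. ring. }
  assert (ha : 0 <= a) by apply Rabs_pos.
  assert (hnn : forall k, (k < n)%nat -> 0 <= U (S k) - U k).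
  { intros k hk. destruct (key k hk) as (t' & ht' & et'). rewrite et'. nra. }
  pose proof (sumR_zero_nonneg (fun k => U (S k) - U k) n hnn eU O orb_n0) as hz. simpl in hz.
  destruct (key O orb_n0) as (t & ht & et). rewrite hz in et. nra.
Qed.

Lemma orb_H0 : cnt (fun k => Nat.even (itin k)) n = O -> Rabs (snd (Dk O)) = 0.
Proof.
  intros h0.
  set (a := Rabs (snd (Dk O))). set (U := fun k => uy (Pk k) (Dk k)).
  assert (key : forall k, (k < n)%nat -> exists t, 0 < t /\ U (S k) - U k = t * a).
  { intros k hk. destruct (orbit_step _ _ _ _ hw hq k hk) as [t hs].
    destruct (step_close _ _ _ _ _ _ hw hs) as [e1 e2].
    destruct (orb_mag k ltac:(lia)) as [m1 m2].
    change (dir (sd n itin k) (snd (q k))) with (Dk k) in e1, e2.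
    change (dir (sd n itin (S k)) (snd (q (S k)))) with (Dk (S k)) in e1, e2.
    change (bpos w (fst (q k))) with (Pk k) in e1, e2.
    change (bpos w (fst (q (S k)))) with (Pk (S k)) in e1, e2.
    rewrite m2 in e2. fold a in e2.
    exists t. split. exact (st_t _ _ _ _ _ _ hs).
    assert (ho : Nat.even (sd n itin (S k)) = false).
    { destruct (Nat.eq_dec (S k) n) as [e|ne].
      - rewrite e, sd_n. apply (cnt_zero _ _ h0). apply orb_n0.
      - rewrite sd_lt by lia. apply (cnt_zero _ _ h0). lia. }
    rewrite ho in e2. unfold U. lra. }
  assert (eU : sumR (fun k => U (S k) - U k) n = 0).
  { rewrite sumR_tele. unfold U, Pk, Dk. rewrite sd_n, sd_0 by apply orb_n0. destruct hq as (_&_&e&_). rewrite e. ring. }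
  assert (ha : 0 <= a) by apply Rabs_pos.
  assert (hnn : forall k, (k < n)%nat -> 0 <= U (S k) - U k).
  { intros k hk. destruct (key k hk) as (t' & ht' & et'). rewrite et'. nra. }
  pose proof (sumR_zero_nonneg (fun k => U (S k) - U k) n hnn eU O orb_n0) as hz. simpl in hz.
  destruct (key O orb_n0) as (t & ht & et). rewrite hz in et. nra.
Qed.

End Orbit.

Lemma mx_my_bet i th : (i < 4)%nat -> - (PI/2) < th < PI/2 ->
  mx i th = cos (bet i th) /\ my i th = sin (bet i th).
Proof.
  intros hi h. unfold mx, my, bet. rewrite (abs_sin _ h), (cos_abs th).
  destruct (Nat.even i).
  - rewrite sin_shift, cos_shift. auto.
  - auto.
Qed.

Lemma bet_range i th : - (PI/2) < th < PI/2 -> 0 <= bet i th <= PI/2.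
Proof. intros h; pose proof (abs_range _ h); unfold bet; destruct (Nat.even i); lra. Qed.

Lemma sin0_th th : - (PI/2) < th < PI/2 -> Rabs (sin th) = 0 -> th = 0.
Proof.
  intros h e. apply sin_inj; try lra. rewrite sin_0. destruct (Rabs_pos (sin th)).
  lra. unfold Rabs in e; destruct (Rcase_abs (sin th)); lra.
Qed.

Lemma pt_on_normal w i P Q : pt_on w i P -> pt_on w i Q -> vdot (vadd Q (vscal (-1) P)) (normal i) = 0.
Proof. destruct P, Q; destruct i as [|[|[|[|i]]]]; unfold vdot, vadd, vscal; simpl; intros; try lra; contradiction. Qed.

Lemma zero_pp w n itin (e : bool) : 0 < w -> is_cyl w n itin ->
  (forall q, in_cyl w n itin q -> forall k, (k <= n)%nat -> snd (q k) = 0) ->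
  (forall k, (k < n)%nat -> Nat.even (itin k) = e) -> ping_pong w n itin.
Proof.
  intros hw [qs [hqs hmin]] hz he.
  pose proof (orb_n0 _ _ _ _ hqs) as hn.
  destruct (orbit_step _ _ _ _ hw hqs O hn) as [t0 s0].
  pose proof (step_ij _ _ _ _ _ _ hw s0) as d0.
  assert (hi : forall k, (k < n)%nat -> (itin k < 4)%nat).
  { intros k hk. destruct hqs as (_&_&_&h). eapply on_side_lt4; eauto. }
  assert (n2 : n = 2%nat).
  { destruct (Nat.eq_dec n 1) as [e1|ne1].
    - exfalso. subst n. apply d0. unfold sd; simpl. reflexivity.
    - destruct (Nat.eq_dec n 2) as [e2|ne2]; auto. exfalso.
      destruct (orbit_step _ _ _ _ hw hqs 1 ltac:(lia)) as [t1 s1].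
      pose proof (step_ij _ _ _ _ _ _ hw s1) as d1.
      rewrite (sd_lt n itin O), (sd_lt n itin 1) in d0 by lia.
      rewrite (sd_lt n itin 1), (sd_lt n itin 2) in d1 by lia.
      rewrite (sd_lt n itin 1) in s1 by lia. rewrite (sd_lt n itin 2) in s1 by lia.
      rewrite (sd_lt n itin O) in s0 by lia. rewrite (sd_lt n itin 1) in s0 by lia.
      pose proof (he O ltac:(lia)) as e0. pose proof (he 1%nat ltac:(lia)) as e1. pose proof (he 2%nat ltac:(lia)) as e2.
      pose proof (hi O ltac:(lia)) as i0. pose proof (hi 1%nat ltac:(lia)) as i1. pose proof (hi 2%nat ltac:(lia)) as i2.
      assert (i20 : itin 2%nat = itin O).
      { destruct (itin O) as [|[|[|[|]]]]; destruct (itin 1%nat) as [|[|[|[|]]]]; destruct (itin 2%nat) as [|[|[|[|]]]];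
        simpl in *; try lia; subst; try discriminate; congruence. }
      apply (hmin 2%nat); try lia.
      pose proof (hz qs hqs O ltac:(lia)) as z0. pose proof (hz qs hqs 1%nat ltac:(lia)) as z1.
      pose proof (hz qs hqs 2%nat ltac:(lia)) as z2.
      pose proof (st_pos _ _ _ _ _ _ s0) as p0. pose proof (st_pos _ _ _ _ _ _ s1) as p1.
      rewrite z0 in p0. rewrite z1 in p1.
      pose proof (bpos_on _ _ _ hw (st_i _ _ _ _ _ _ s0)) as o0.
      pose proof (bpos_on _ _ _ hw (st_j _ _ _ _ _ _ s1)) as o2. rewrite i20 in o2.
      assert (ep : bpos w (fst (qs 2%nat)) = bpos w (fst (qs O))).
      { rewrite p1, p0 in *. revert o0 o2. rewrite !dir_eq by lia. rewrite sin_0, cos_0.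
        destruct (bpos w (fst (qs O))) as [X Y]. unfold vadd, vscal; simpl.
        destruct (itin O) as [|[|[|[|]]]]; destruct (itin 1%nat) as [|[|[|[|]]]]; simpl in *; try lia; try congruence;
        intros; try congruence; f_equal; lra. }
      pose proof (st_j _ _ _ _ _ _ s1) as oj. rewrite i20 in oj.
      pose proof (bpos_inj _ _ _ _ hw oj (st_i _ _ _ _ _ _ s0) ep) as es.
      destruct (qs 2%nat), (qs O); simpl in *; subst; auto. }
  subst n. split; auto. split.
  - rewrite (sd_lt 2 itin O), (sd_lt 2 itin 1) in d0 by lia.
    pose proof (he O ltac:(lia)) as e0. pose proof (he 1%nat ltac:(lia)) as e1.
    pose proof (hi O ltac:(lia)) as i0. pose proof (hi 1%nat ltac:(lia)) as i1.
    destruct (itin O) as [|[|[|[|]]]]; destruct (itin 1%nat) as [|[|[|[|]]]]; simpl in *; try lia; subst; try discriminate; reflexivity.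
  - intros q hq. split; apply (hz q hq); lia.
Qed.

Definition Hn (n : nat) (itin : nat -> nat) : nat := cnt (fun k => Nat.even (itin k)) n.
Definition Vn (n : nat) (itin : nat -> nat) : nat := cnt (fun k => oddb (itin k)) n.

Lemma orb_th w n itin q : 0 < w -> in_cyl w n itin q -> forall k, (k <= n)%nat -> - (PI/2) < snd (q k) < PI/2.
Proof.
  intros hw hq k hk. destruct (Nat.eq_dec k n) as [e|ne]. subst k. pose proof hq as (_&_&e&_). rewrite e.
  destruct (orbit_step _ _ _ _ hw hq O (orb_n0 _ _ _ _ hq)) as [t s]. exact (st_thx _ _ _ _ _ _ s).
  destruct (orbit_step _ _ _ _ hw hq k ltac:(lia)) as [t s]. exact (st_thx _ _ _ _ _ _ s).
Qed.

Lemma V0_pp w n itin : 0 < w -> is_cyl w n itin -> Vn n itin = O -> ping_pong w n itin.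
Proof.
  intros hw hc h0. apply (zero_pp w n itin true); auto.
  - intros q hq k hk.
    pose proof (orb_V0 _ _ _ _ hw hq h0) as a0.
    destruct (orb_mag _ _ _ _ hw hq k hk) as [m1 _]. rewrite a0 in m1. unfold Dk in m1.
    pose proof (orbit_side _ _ _ _ _ hq k hk) as os.
    pose proof (orb_th _ _ _ _ hw hq k hk) as th.
    rewrite mx_eq in m1 by (auto; eapply on_side_lt4; eauto).
    assert (ev : Nat.even (sd n itin k) = true).
    { unfold sd. destruct (Nat.ltb_spec k n).
      - pose proof (cnt_zero _ _ h0 k H) as z. unfold oddb in z. destruct (Nat.even (itin k)); auto.
      - pose proof (cnt_zero _ _ h0 O (orb_n0 _ _ _ _ hq)) as z. unfold oddb in z. destruct (Nat.even (itin O)); auto. }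
    unfold mx in m1. rewrite ev in m1. apply sin0_th; auto.
  - intros k hk. pose proof (cnt_zero _ _ h0 k hk) as z. unfold oddb in z. destruct (Nat.even (itin k)); auto.
Qed.

Lemma H0_pp w n itin : 0 < w -> is_cyl w n itin -> Hn n itin = O -> ping_pong w n itin.
Proof.
  intros hw hc h0. apply (zero_pp w n itin false); auto.
  - intros q hq k hk.
    pose proof (orb_H0 _ _ _ _ hw hq h0) as a0.
    destruct (orb_mag _ _ _ _ hw hq k hk) as [_ m1]. rewrite a0 in m1. unfold Dk in m1.
    pose proof (orbit_side _ _ _ _ _ hq k hk) as os.
    pose proof (orb_th _ _ _ _ hw hq k hk) as th.
    rewrite my_eq in m1 by (auto; eapply on_side_lt4; eauto).
    assert (ev : Nat.even (sd n itin k) = false).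
    { unfold sd. destruct (Nat.ltb_spec k n).
      - exact (cnt_zero _ _ h0 k H).
      - exact (cnt_zero _ _ h0 O (orb_n0 _ _ _ _ hq)). }
    unfold my in m1. rewrite ev in m1. apply sin0_th; auto.
  - intros k hk. exact (cnt_zero _ _ h0 k hk).
Qed.



Lemma stable_rel w n itin : 0 < w -> lam_stable_cyl w n itin ->
  exists c, INR (Hn n itin) * (PI/2 - c) = INR (Vn n itin) * c /\
            w * INR (Vn n itin) * sin c = INR (Hn n itin) * cos c /\ 0 <= c <= PI/2.
Proof.
  intros hw (hc & (q & hq & hp) & _).
  pose proof (plus_sum _ _ _ _ hw hp) as hs.
  pose proof (orb_n0 _ _ _ _ hq) as hn.
  set (c := bet (sd n itin O) (snd (q O))).
  pose proof (orb_th _ _ _ _ hw hq O ltac:(lia)) as th0.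
  assert (hi0 : (sd n itin O < 4)%nat) by (eapply on_side_lt4; apply (orbit_side _ _ _ _ _ hq O); lia).
  exists c. split; [|split].
  - rewrite (sumR_ext _ (fun k => (PI/2 - c) * (if Nat.even (itin k) then 1 else 0) + (-c) * (if oddb (itin k) then 1 else 0))) in hs.
    + rewrite sumR_plus, !sumR_scal, <- !cnt_INR in hs. unfold Hn, Vn. lra.
    + intros k hk. pose proof (orb_bet _ _ _ _ hw hq k ltac:(lia)) as eb. fold c in eb.
      rewrite sd_lt in eb by auto. unfold bet in eb. unfold sg, oddb.
      destruct (Nat.even (itin k)); simpl; lra.
  - pose proof (orb_close _ _ _ _ hw hq) as e. unfold Dk in e.
    rewrite mx_eq, my_eq in e by auto. destruct (mx_my_bet _ _ hi0 th0) as [m1 m2].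
    rewrite m1, m2 in e. fold c in e. unfold Hc, Vc in e. unfold Hn, Vn. lra.
  - apply bet_range; auto.
Qed.

Lemma stable_special w n itin : 0 < w -> lam_stable_cyl w n itin ->
  (0 < Hn n itin)%nat -> (0 < Vn n itin)%nat -> special_width w (Hn n itin) (Vn n itin).
Proof.
  intros hw hs h1 h2. destruct (stable_rel _ _ _ hw hs) as (c & e1 & e2 & hc).
  pose proof (lt_0_INR _ h1) as H1. pose proof (lt_0_INR _ h2) as H2.
  set (H := INR (Hn n itin)) in *. set (V := INR (Vn n itin)) in *.
  assert (ec : c = PI * H / (2 * (H + V))) by (field_simplify_eq; lra).
  assert (c0 : 0 < c < PI/2).
  { rewrite ec. pose proof PI_RGT_0. split.
    apply Rdiv_lt_0_compat; nra.
    apply (Rmult_lt_reg_r (2 * (H + V))). lra. field_simplify; try lra. nra. }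
  assert (sp : 0 < sin c) by (apply sin_gt_0; lra).
  unfold special_width. fold H V. rewrite <- ec. unfold cot.
  field_simplify_eq; try lra.
Qed.

From Coquelicot Require Coquelicot.
Module CQ.
Import Coquelicot.Coquelicot.
Definition gg (t : R) : R := 2 * t * cos t / ((PI - 2 * t) * sin t).
Lemma gg_der t : 0 < t < PI/2 -> is_derive gg t ((2 * PI * sin t * cos t - 2 * t * (PI - 2 * t)) / ((PI - 2 * t) * sin t)^2).
Proof.
  intros ht. assert (0 < sin t) by (apply sin_gt_0; lra).
  unfold gg. auto_derive.
  - apply Rmult_integral_contrapositive; split; lra.
  - pose proof (sin2_cos2 t) as e. unfold Rsqr in e.
    assert (hc : cos t * cos t = 1 - sin t * sin t) by lra.
    set (s := sin t) in *. set (c := cos t) in *.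
    assert (PI - 2 * t <> 0) by lra.
    field_simplify; try (split; lra). 
    replace (c ^ 2) with (1 - s ^ 2) by (simpl; lra). f_equal. ring.
Qed.

Lemma PI_lt : PI < 16/5.
Proof.
  destruct (Rlt_dec PI (16/5)) as [h|h]; auto. exfalso.
  assert (hc : 0 <= cos (8/5)).
  { destruct (Req_dec (8/5) (PI/2)) as [e|e]. rewrite e, cos_PI2; lra.
    left; apply cos_gt_0; lra. }
  pose proof (COS (8/5) ltac:(pose proof PI_RGT_0; lra) ltac:(lra)) as [_ hu].
  unfold cos_ub, cos_approx in hu. cbn [sum_f_R0] in hu. unfold cos_term in hu.
  cbn [Nat.mul Nat.add] in hu.
  rewrite !fact_simpl, !mult_INR in hu. cbn [Factorial.fact] in hu.
  rewrite ?S_INR in hu. simpl INR in hu. simpl pow in hu.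
  lra.
Qed.

Lemma sin_para_half u : 0 < u <= PI/2 -> u * (PI - u) < PI * sin u.
Proof.
  intros hu. pose proof PI_lt as hp. pose proof PI2_3_2.
  pose proof (SIN u ltac:(lra) ltac:(lra)) as [hl _].
  unfold sin_lb, sin_approx in hl. cbn [sum_f_R0] in hl. unfold sin_term in hl.
  cbn [Nat.mul Nat.add] in hl.
  rewrite !fact_simpl, !mult_INR in hl. cbn [Factorial.fact] in hl.
  rewrite ?S_INR in hl. simpl INR in hl. simpl pow in hl.
  assert (u <= 8/5) by lra.
  assert (h5 : u*u*u*u*u <= 11) by (assert (u*u <= 64/25) by nra; assert (u*u*u*u <= 4096/625) by nra; nra).
  assert (hk : 0 < 1 - PI * u / 6 - PI * (u*u*u*u*u) / 5040).
  { assert (PI * u <= 16/5 * (8/5)) by (apply Rmult_le_compat; lra).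
    assert (0 <= u*u*u*u*u) by (repeat apply Rmult_le_pos; lra).
    assert (PI * (u*u*u*u*u) <= 16/5 * 11) by (apply Rmult_le_compat; try lra; pose proof PI_RGT_0; lra). lra. }
  assert (hs : u - u*u*u/6 + u*u*u*u*u/120 - u*u*u*u*u*u*u/5040 <= sin u) by lra.
  assert (0 <= PI * (u*u*u) / 120 * (u*u)).
  { pose proof PI_RGT_0. assert (0 <= u*u*u) by (repeat apply Rmult_le_pos; lra).
    apply Rmult_le_pos; [|nra]. unfold Rdiv; apply Rmult_le_pos; [nra|left; apply Rinv_0_lt_compat; lra]. }
  assert (0 < u*u) by nra.
  assert (PI * (u - u*u*u/6 + u*u*u*u*u/120 - u*u*u*u*u*u*u/5040) - u * (PI - u)
          = u*u * (1 - PI * u / 6 - PI * (u*u*u*u*u) / 5040) + PI * (u*u*u) / 120 * (u*u)) by field.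
  pose proof PI_RGT_0.
  assert (0 < u*u * (1 - PI * u / 6 - PI * (u*u*u*u*u) / 5040)) by (apply Rmult_lt_0_compat; lra).
  assert (PI * (u - u*u*u/6 + u*u*u*u*u/120 - u*u*u*u*u*u*u/5040) <= PI * sin u) by (apply Rmult_le_compat_l; lra).
  lra.
Qed.

Lemma sin_para u : 0 < u < PI -> u * (PI - u) < PI * sin u.
Proof.
  intros hu. destruct (Rle_dec u (PI/2)).
  - apply sin_para_half; lra.
  - rewrite <- sin_PI_x. replace (u * (PI - u)) with ((PI - u) * (PI - (PI - u))) by ring.
    apply sin_para_half; lra.
Qed.

Lemma gg_incr x y : 0 < x -> x < y -> y < PI/2 -> gg x < gg y.
Proof.
  intros h1 h2 h3.
  apply (incr_function gg 0 (PI/2) (fun t => (2 * PI * sin t * cos t - 2 * t * (PI - 2 * t)) / ((PI - 2 * t) * sin t)^2)); simpl; auto; try lra.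
  - intros t a b. apply gg_der; lra.
  - intros t a b. assert (0 < sin t) by (apply sin_gt_0; lra).
    assert (0 < (PI - 2 * t) * sin t) by (apply Rmult_lt_0_compat; lra).
    apply Rdiv_lt_0_compat. 2: nra.
    pose proof (sin_para (2 * t) ltac:(lra)) as hp. rewrite sin_2a in hp. nra.
Qed.

End CQ.
Import CQ.

Lemma special_gg w p q : (0 < p)%nat -> (0 < q)%nat -> special_width w p q ->
  w = gg (PI * INR p / (2 * (INR p + INR q))) /\ 0 < PI * INR p / (2 * (INR p + INR q)) < PI/2.
Proof.
  intros hp hq e. pose proof (lt_0_INR _ hp). pose proof (lt_0_INR _ hq). pose proof PI_RGT_0.
  set (x := PI * INR p / (2 * (INR p + INR q))).
  assert (hx : 0 < x < PI/2).
  { unfold x. split. apply Rdiv_lt_0_compat; nra.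
    apply (Rmult_lt_reg_r (2 * (INR p + INR q))). lra. field_simplify; try lra. nra. }
  split; auto. unfold special_width, cot in e. fold x in e. rewrite e. unfold gg.
  assert (0 < sin x) by (apply sin_gt_0; lra).
  assert (e2 : PI - 2 * x = PI * INR q / (INR p + INR q)) by (unfold x; field; lra).
  rewrite e2. unfold x. field. repeat split; try lra. fold x. lra.
Qed.

Lemma special_inj w p q p' q' : (0 < p)%nat -> (0 < q)%nat -> (0 < p')%nat -> (0 < q')%nat ->
  special_width w p q -> special_width w p' q' -> INR p * INR q' = INR p' * INR q.
Proof.
  intros hp hq hp' hq' e e'.
  destruct (special_gg _ _ _ hp hq e) as [w1 r1]. destruct (special_gg _ _ _ hp' hq' e') as [w2 r2].
  set (x := PI * INR p / (2 * (INR p + INR q))) in *. set (x' := PI * INR p' / (2 * (INR p' + INR q'))) in *.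
  assert (ex : x = x').
  { destruct (Rtotal_order x x') as [l|[l|l]]; auto.
    - pose proof (gg_incr x x' ltac:(lra) l ltac:(lra)). lra.
    - pose proof (gg_incr x' x ltac:(lra) l ltac:(lra)). lra. }
  unfold x, x' in ex. pose proof (lt_0_INR _ hp). pose proof (lt_0_INR _ hq).
  pose proof (lt_0_INR _ hp'). pose proof (lt_0_INR _ hq'). pose proof PI_RGT_0.
  apply (Rmult_eq_compat_r ((2 * (INR p + INR q)) * (2 * (INR p' + INR q')) / PI)) in ex.
  field_simplify in ex; try lra.
Qed.

Lemma nonpp_HV w n itin : 0 < w -> lam_stable_cyl w n itin -> ~ ping_pong w n itin ->
  (0 < Hn n itin)%nat /\ (0 < Vn n itin)%nat.
Proof.
  intros hw hs hnp. destruct hs as [hc _]. split.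
  - destruct (Hn n itin) eqn:E; [|lia]. exfalso. apply hnp. apply H0_pp; auto.
  - destruct (Vn n itin) eqn:E; [|lia]. exfalso. apply hnp. apply V0_pp; auto.
Qed.

Lemma slope_part w p q n itin : 0 < w -> (0 < p)%nat -> (0 < q)%nat -> special_width w p q ->
  lam_stable_cyl w n itin -> ~ ping_pong w n itin -> cyl_abs_slope w n itin (INR p / (INR q * w)).
Proof.
  intros hw hp hq hsp hs hnp.
  destruct (nonpp_HV _ _ _ hw hs hnp) as [h1 h2].
  pose proof (stable_special _ _ _ hw hs h1 h2) as hsp2.
  pose proof (special_inj _ _ _ _ _ hp hq h1 h2 hsp hsp2) as ei.
  intros q' hq' k hk.
  pose proof (orb_close _ _ _ _ hw hq') as ec. unfold Hc, Vc in ec.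
  destruct (orb_mag _ _ _ _ hw hq' k ltac:(lia)) as [m1 m2]. unfold Dk in *.
  rewrite sd_lt in m1, m2 by auto. rewrite m1, m2.
  fold (Hn n itin) (Vn n itin) in ec.
  pose proof (lt_0_INR _ hp). pose proof (lt_0_INR _ hq). pose proof (lt_0_INR _ h1). pose proof (lt_0_INR _ h2).
  apply (Rmult_eq_reg_l (INR q * w * INR (Vn n itin))). 2: apply Rgt_not_eq; repeat apply Rmult_lt_0_compat; lra.
  field_simplify; try lra.
  replace (INR q * w * INR (Vn n itin) * Rabs (snd (dir (sd n itin 0) (snd (q' 0%nat)))))
    with (INR q * (w * INR (Vn n itin) * Rabs (snd (dir (sd n itin 0) (snd (q' 0%nat)))))) by ring.
  rewrite ec. replace (INR (Vn n itin) * INR p) with (INR (Hn n itin) * INR q) by lra. ring.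
Qed.

Definition spos (w : R) (i : nat) (P : R * R) : R :=
  match i with 0%nat => fst P | 1%nat => w + snd P | 2%nat => 2 * w + 1 - fst P | _ => 2 * w + 2 - snd P end.

Lemma spos_ok w i P : 0 < w -> pt_on w i P -> on_side w i (spos w i P) /\ bpos w (spos w i P) = P.
Proof.
  intros hw h. destruct P as [X Y].
  destruct i as [|[|[|[|i]]]]; simpl in h |- *.
  - assert (on_side w 0 X) by (simpl; lra). split; auto. rewrite bpos0; auto. f_equal; lra.
  - assert (on_side w 1 (w+Y)) by (simpl; lra). split; auto. rewrite bpos1; auto. f_equal; lra.
  - assert (on_side w 2 (2*w+1-X)) by (simpl; lra). split; auto. rewrite bpos2; auto. f_equal; lra.
  - assert (on_side w 3 (2*w+2-Y)) by (simpl; lra). split; auto. rewrite bpos3; auto. f_equal; lra.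
  - contradiction.
Qed.

Lemma chord w i j P Q lam : 0 < w -> pt_on w i P -> pt_on w j Q -> i <> j -> 0 < lam < 1 ->
  Defs.interior w (vadd P (vscal lam (vadd Q (vscal (-1) P)))).
Proof.
  intros hw hP hQ hij hl. destruct P as [X Y], Q as [X' Y']. unfold Defs.interior, vadd, vscal; simpl.
  destruct i as [|[|[|[|i]]]]; destruct j as [|[|[|[|j]]]]; simpl in *; try contradiction; try lia; nra.
Qed.

Lemma chord_pos w i j P Q : 0 < w -> pt_on w i P -> pt_on w j Q -> i <> j ->
  0 < vdot (vadd Q (vscal (-1) P)) (normal i).
Proof.
  intros hw hP hQ hij. destruct P as [X Y], Q as [X' Y']. unfold vdot, vadd, vscal; simpl.
  destruct i as [|[|[|[|i]]]]; destruct j as [|[|[|[|j]]]]; simpl in *; try contradiction; try lia; lra.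
Qed.

Lemma build_step w x y i j lam : 0 < w -> on_side w i (fst x) -> on_side w j (fst y) -> i <> j ->
  - (PI/2) < snd x < PI/2 -> - (PI/2) < snd y < PI/2 ->
  bpos w (fst y) = vadd (bpos w (fst x)) (vscal lam (dir i (snd x))) ->
  dir j (snd y) = refl j (dir i (snd x)) -> Bill w x y.
Proof.
  intros hw hi hj hij hx hy hp hd.
  pose proof (bpos_on _ _ _ hw hi) as pi. pose proof (bpos_on _ _ _ hw hj) as pj.
  assert (hi4 : (i < 4)%nat) by (eapply on_side_lt4; eauto).
  assert (hl : 0 < lam).
  { pose proof (chord_pos _ _ _ _ _ hw pi pj hij) as c. rewrite hp in c.
    replace (vadd (vadd (bpos w (fst x)) (vscal lam (dir i (snd x)))) (vscal (-1) (bpos w (fst x))))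
      with (vscal lam (dir i (snd x))) in c by (unfold vadd, vscal; destruct (bpos w (fst x)), (dir i (snd x)); simpl; f_equal; ring).
    pose proof (dir_inward i (snd x) hi4 hx) as e. pose proof (cos_pos_th _ hx).
    unfold vdot, vscal in c, e; simpl in *. nra. }
  apply (step_Bill _ _ _ i j lam). constructor; auto.
  intros tau ht. pose proof (chord _ _ _ _ _ (tau / lam) hw pi pj hij) as c.
  rewrite hp in c.
  replace (vadd (bpos w (fst x)) (vscal (tau / lam) (vadd (vadd (bpos w (fst x)) (vscal lam (dir i (snd x)))) (vscal (-1) (bpos w (fst x))))))
    with (vadd (bpos w (fst x)) (vscal tau (dir i (snd x)))) in c.
  apply c. split. apply Rdiv_lt_0_compat; lra. apply (Rmult_lt_reg_r lam); auto. field_simplify; lra.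
  unfold vadd, vscal; destruct (bpos w (fst x)), (dir i (snd x)); simpl; f_equal; field; lra.
Qed.

From Stdlib Require Import Reals Lra Lia ZArith Znumtheory Classical.
Open Scope R_scope.

Definition sgn (x : R) : R := if Rlt_dec 0 x then 1 else -1.

Lemma sgn_mul_abs x : x <> 0 -> sgn x * x = Rabs x.
Proof. intros h; unfold sgn; destruct (Rlt_dec 0 x); [rewrite Rabs_pos_eq; lra|rewrite Rabs_left; lra]. Qed.

Lemma sgn_sq x : sgn x * sgn x = 1.
Proof. unfold sgn; destruct (Rlt_dec 0 x); ring. Qed.

Lemma sgn_abs x : x <> 0 -> x = sgn x * Rabs x.
Proof. intros h; unfold sgn; destruct (Rlt_dec 0 x); [rewrite Rabs_pos_eq; lra|rewrite Rabs_left; lra]. Qed.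

Lemma sgn_pos x : 0 < x -> sgn x = 1.
Proof. intros; unfold sgn; destruct (Rlt_dec 0 x); lra. Qed.
Lemma sgn_neg x : x < 0 -> sgn x = -1.
Proof. intros; unfold sgn; destruct (Rlt_dec 0 x); lra. Qed.
Lemma sgn_opp x : x <> 0 -> sgn (- x) = - sgn x.
Proof. intros h; unfold sgn; destruct (Rlt_dec 0 x); destruct (Rlt_dec 0 (-x)); lra. Qed.

Lemma dir_unit i th : (i < 4)%nat -> fst (dir i th) ^ 2 + snd (dir i th) ^ 2 = 1.
Proof. intros hi. rewrite dir_eq by auto. pose proof (sin2_cos2 th) as e; unfold Rsqr in e.
  destruct i as [|[|[|[|i]]]]; simpl; try lia; lra. Qed.

Lemma mod_S n m : (0 < n)%nat -> ((S m) mod n = if (S (m mod n) =? n) then O else S (m mod n))%nat.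
Proof.
  intros hn. pose proof (Nat.mod_upper_bound m n ltac:(lia)) as hb.
  replace (S m) with (m + 1)%nat by lia. rewrite <- Nat.Div0.add_mod_idemp_l.
  destruct (Nat.eqb_spec (S (m mod n)) n) as [e|e].
  - replace (m mod n + 1)%nat with n by lia. apply Nat.Div0.mod_same.
  - rewrite Nat.mod_small by lia. lia.
Qed.

Lemma ext_step w n itin A : 0 < w -> in_cyl w n itin A -> forall m,
  exists t, step w (A (m mod n)%nat) (A ((S m) mod n)%nat) (itin (m mod n)%nat) (itin ((S m) mod n)%nat) t.
Proof.
  intros hw hA m. pose proof (orb_n0 _ _ _ _ hA) as h0.
  pose proof (Nat.mod_upper_bound m n ltac:(lia)) as hb.
  destruct (orbit_step _ _ _ _ hw hA (m mod n) hb) as [t hs]. exists t.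
  rewrite sd_lt in hs by auto. rewrite (mod_S n m h0).
  destruct (Nat.eqb_spec (S (m mod n)) n) as [e|e].
  - rewrite e in hs. rewrite sd_n in hs. destruct hA as (_&_&e'&_). rewrite e' in hs. auto.
  - rewrite sd_lt in hs by lia. auto.
Qed.

Lemma ext_period n (f : nat -> R * R) m c : (0 < n)%nat -> f ((m + c * n) mod n)%nat = f (m mod n)%nat.
Proof. intros; rewrite Nat.Div0.mod_add; auto. Qed.

Section P4.
Variables (w : R) (p q : nat).
Hypothesis hw : 0 < w.
Hypothesis hp : (0 < p)%nat.
Hypothesis hq : (0 < q)%nat.

Definition PP : R := INR p.
Definition QQ : R := INR q.
Definition rr : R := PP / (QQ * w).

Lemma PP_pos : 0 < PP. Proof. apply lt_0_INR; auto. Qed.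
Lemma QQ_pos : 0 < QQ. Proof. apply lt_0_INR; auto. Qed.
Lemma rr_pos : 0 < rr. Proof. unfold rr; pose proof PP_pos; pose proof QQ_pos. apply Rdiv_lt_0_compat; nra. Qed.

Definition zeta (P D : R * R) : R := PP * sgn (fst D) * fst P / w - QQ * sgn (snd D) * snd P.

Definition goodD (D : R * R) : Prop := Rabs (snd D) = rr * Rabs (fst D) /\ fst D ^ 2 + snd D ^ 2 = 1.

Definition aa : R := / sqrt (1 + rr ^ 2).

Lemma good_fst D : goodD D -> Rabs (fst D) = aa.
Proof.
  intros [h1 h2]. pose proof rr_pos.
  assert (e : Rabs (fst D) ^ 2 * (1 + rr ^ 2) = 1).
  { rewrite <- (pow2_abs (snd D)), <- (pow2_abs (fst D)) in h2. rewrite h1 in h2. lra. }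
  assert (hs : 0 < sqrt (1 + rr^2)) by (apply sqrt_lt_R0; nra).
  assert (e2 : sqrt (1 + rr^2) ^ 2 = 1 + rr^2) by (rewrite <- Rsqr_pow2; apply Rsqr_sqrt; nra).
  assert (ha : 0 <= Rabs (fst D)) by apply Rabs_pos.
  unfold aa. apply (Rmult_eq_reg_l (sqrt (1 + rr^2))); [|lra]. rewrite Rinv_r by lra.
  assert ((sqrt (1 + rr ^ 2) * Rabs (fst D))^2 = 1) by (rewrite Rpow_mult_distr, e2; lra).
  assert (0 <= sqrt (1 + rr ^ 2) * Rabs (fst D)) by nra. nra.
Qed.

Lemma aa_pos : 0 < aa.
Proof. unfold aa. apply Rinv_0_lt_compat. apply sqrt_lt_R0. pose proof rr_pos; nra. Qed.

Lemma good_fst_nz D : goodD D -> fst D <> 0.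
Proof. intros h e. pose proof (good_fst D h). rewrite e, Rabs_R0 in H. pose proof aa_pos; lra. Qed.
Lemma good_snd_nz D : goodD D -> snd D <> 0.
Proof. intros h e. pose proof (good_fst D h). destruct h as [h1 _]. rewrite e, Rabs_R0, H in h1.
  pose proof aa_pos; pose proof rr_pos; nra. Qed.

Lemma good_eq D D' : goodD D -> goodD D' -> sgn (fst D) = sgn (fst D') -> sgn (snd D) = sgn (snd D') -> D = D'.
Proof.
  intros h h' e1 e2. destruct D as [x y], D' as [x' y']. simpl in *.
  pose proof (good_fst _ h) as a1. pose proof (good_fst _ h') as a2. simpl in *.
  destruct h as [b1 _], h' as [b2 _]. simpl in *.
  rewrite (sgn_abs x), (sgn_abs x'), (sgn_abs y), (sgn_abs y'); try (apply good_snd_nz || apply good_fst_nz); auto.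
  - rewrite e1, e2, b1, b2, a1, a2. auto.
  all: intro; subst; rewrite Rabs_R0 in *; pose proof aa_pos; pose proof rr_pos; nra.
Qed.

Lemma zeta_flight P D t : goodD D -> zeta (vadd P (vscal t D)) D = zeta P D.
Proof.
  intros h. unfold zeta, vadd, vscal; simpl.
  pose proof (sgn_mul_abs _ (good_fst_nz D h)). pose proof (sgn_mul_abs _ (good_snd_nz D h)).
  destruct h as [h1 _]. unfold rr in h1. pose proof PP_pos. pose proof QQ_pos.
  assert (e : PP * sgn (fst D) * (t * fst D) / w - QQ * sgn (snd D) * (t * snd D) = 0).
  { replace (PP * sgn (fst D) * (t * fst D) / w - QQ * sgn (snd D) * (t * snd D))
      with (t * (PP * (sgn (fst D) * fst D) / w - QQ * (sgn (snd D) * snd D))) by (field; lra).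
    rewrite H, H0, h1. field. lra. }
  replace (PP * sgn (fst D) * (fst P + t * fst D) / w - QQ * sgn (snd D) * (snd P + t * snd D))
    with (PP * sgn (fst D) * fst P / w - QQ * sgn (snd D) * snd P + (PP * sgn (fst D) * (t * fst D) / w - QQ * sgn (snd D) * (t * snd D))) by (field; lra).
  rewrite e; ring.
Qed.


Definition JJ (j : nat) : R := match j with 1%nat => -2 * PP | 2%nat => 2 * QQ | _ => 0 end.

Lemma zeta_step x y i j t : step w x y i j t -> goodD (dir i (snd x)) ->
  zeta (bpos w (fst y)) (dir j (snd y)) = zeta (bpos w (fst x)) (dir i (snd x)) + JJ j.
Proof.
  intros hs hg.
  pose proof (step_arrive_comp _ _ _ _ _ _ hw hs) as har.
  pose proof (bpos_on _ _ _ hw (st_j _ _ _ _ _ _ hs)) as p2.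
  pose proof (zeta_flight (bpos w (fst x)) (dir i (snd x)) t hg) as ef.
  rewrite <- (st_pos _ _ _ _ _ _ hs) in ef. rewrite <- ef.
  rewrite (st_dir _ _ _ _ _ _ hs).
  pose proof (good_fst_nz _ hg) as n1. pose proof (good_snd_nz _ hg) as n2.
  assert (hj : (j < 4)%nat) by (eapply on_side_lt4; exact (st_j _ _ _ _ _ _ hs)).
  destruct (dir i (snd x)) as [a b]. destruct (bpos w (fst y)) as [X Y].
  unfold zeta, refl, JJ in *; simpl in *.
  destruct j as [|[|[|[|j]]]]; simpl in *; try lia.
  - rewrite sgn_opp by auto. destruct p2 as [e _]; subst Y. ring.
  - rewrite sgn_opp by auto. destruct p2 as [e _]; subst X. rewrite sgn_pos by auto. field. lra.
  - rewrite sgn_opp by auto. destruct p2 as [e _]; subst Y. rewrite (sgn_pos b) by auto. ring.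
  - rewrite sgn_opp by auto. destruct p2 as [e _]; subst X. field. lra.
Qed.


Definition gZ : Z := Z.gcd (Z.of_nat p) (Z.of_nat q).
Definition gg0 : R := IZR gZ.

Lemma gZ_pos : (0 < gZ)%Z.
Proof. unfold gZ. pose proof (Z.gcd_nonneg (Z.of_nat p) (Z.of_nat q)).
  destruct (Z.eq_dec (Z.gcd (Z.of_nat p) (Z.of_nat q)) 0) as [e|e]; [|lia].
  apply Z.gcd_eq_0 in e. lia. Qed.

Lemma gg0_pos : 0 < gg0.
Proof. unfold gg0. apply IZR_lt. apply gZ_pos. Qed.

Lemma PP_div : exists z : Z, PP = gg0 * IZR z.
Proof. pose proof (Z.gcd_divide_l (Z.of_nat p) (Z.of_nat q)) as d. fold gZ in d. destruct d as [z e]. exists z.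
  unfold PP, gg0. rewrite INR_IZR_INZ, e, mult_IZR. ring. Qed.

Lemma QQ_div : exists z : Z, QQ = gg0 * IZR z.
Proof. pose proof (Z.gcd_divide_r (Z.of_nat p) (Z.of_nat q)) as d. fold gZ in d. destruct d as [z e]. exists z.
  unfold QQ, gg0. rewrite INR_IZR_INZ, e, mult_IZR. ring. Qed.

Lemma bezout_g : exists al be : Z, PP * IZR al - QQ * IZR be = gg0.
Proof.
  destruct (Z.gcd_bezout (Z.of_nat p) (Z.of_nat q) gZ eq_refl) as [a [b e]].
  exists a, (- b)%Z. unfold PP, QQ, gg0. rewrite !INR_IZR_INZ, <- e, opp_IZR, plus_IZR, !mult_IZR. ring.
Qed.

Lemma not_both_even : ~ ((exists z1, PP = 2 * gg0 * IZR z1) /\ (exists z2, QQ = 2 * gg0 * IZR z2)).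
Proof.
  intros [[z1 e1] [z2 e2]].
  assert (d1 : (2 * gZ | Z.of_nat p)%Z).
  { exists z1. apply eq_IZR. rewrite <- INR_IZR_INZ. fold PP. rewrite e1, !mult_IZR. unfold gg0. simpl. ring. }
  assert (d2 : (2 * gZ | Z.of_nat q)%Z).
  { exists z2. apply eq_IZR. rewrite <- INR_IZR_INZ. fold QQ. rewrite e2, !mult_IZR. unfold gg0. simpl. ring. }
  pose proof (Z.gcd_greatest _ _ _ d1 d2) as d. fold gZ in d.
  pose proof gZ_pos. apply Z.divide_pos_le in d; lia.
Qed.

Definition modeq (a b : R) : Prop := exists z : Z, a = b + 2 * gg0 * IZR z.
Definition ingZ (a : R) : Prop := exists z : Z, a = gg0 * IZR z.

Lemma modeq_refl a : modeq a a.
Proof. exists 0%Z. simpl. ring. Qed.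
Lemma modeq_sym a b : modeq a b -> modeq b a.
Proof. intros [z e]. exists (- z)%Z. rewrite opp_IZR. lra. Qed.
Lemma modeq_trans a b c : modeq a b -> modeq b c -> modeq a c.
Proof. intros [z e] [z' e']. exists (z + z')%Z. rewrite plus_IZR. lra. Qed.
Lemma modeq_add a b c : modeq a b -> modeq (a + c) (b + c).
Proof. intros [z e]. exists z. lra. Qed.

Lemma JJ_mod j : modeq (JJ j) 0.
Proof.
  destruct PP_div as [z1 e1]. destruct QQ_div as [z2 e2].
  unfold JJ. destruct j as [|[|[|j]]].
  - apply modeq_refl.
  - exists (- z1)%Z. rewrite opp_IZR, e1. ring.
  - exists z2. rewrite e2. ring.
  - apply modeq_refl.
Qed.

Lemma modeq_ingZ a b : modeq a b -> ingZ b -> ingZ a.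
Proof. intros [z e] [z' e']. exists (2 * z + z')%Z. rewrite plus_IZR, mult_IZR. simpl. lra. Qed.

Lemma ingZ_between a m : ingZ a -> gg0 * IZR m < a < gg0 * (IZR m + 1) -> False.
Proof.
  intros [z e] [h1 h2]. subst a. pose proof gg0_pos.
  assert (IZR m < IZR z) by (apply (Rmult_lt_reg_l gg0); lra).
  assert (IZR z < IZR m + 1) by (apply (Rmult_lt_reg_l gg0); lra).
  apply lt_IZR in H0. rewrite <- plus_IZR in H1. apply lt_IZR in H1. lia.
Qed.

Definition corner (P : R * R) : Prop := (fst P = 0 \/ fst P = w) /\ (snd P = 0 \/ snd P = 1).

Lemma zeta_corner P D : corner P -> ingZ (zeta P D).
Proof.
  intros [h1 h2]. destruct PP_div as [z1 e1]. destruct QQ_div as [z2 e2]. unfold zeta.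
  assert (s1 : sgn (fst D) = 1 \/ sgn (fst D) = -1) by (unfold sgn; destruct (Rlt_dec 0 (fst D)); auto).
  assert (s2 : sgn (snd D) = 1 \/ sgn (snd D) = -1) by (unfold sgn; destruct (Rlt_dec 0 (snd D)); auto).
  rewrite e1, e2.
  destruct h1 as [h1|h1]; destruct h2 as [h2|h2]; rewrite h1, h2;
  destruct s1 as [s1|s1]; destruct s2 as [s2|s2]; rewrite s1, s2.
  all: try (exists 0%Z; simpl; field; lra).
  all: try (exists z1; field; lra).
  all: try (exists (- z1)%Z; rewrite opp_IZR; field; lra).
  all: try (exists z2; field; lra).
  all: try (exists (- z2)%Z; rewrite opp_IZR; field; lra).
  all: try (exists (z1 - z2)%Z; rewrite minus_IZR; field; lra).
  all: try (exists (z1 + z2)%Z; rewrite plus_IZR; field; lra).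
  all: try (exists (- z1 - z2)%Z; rewrite minus_IZR, opp_IZR; field; lra).
  all: try (exists (- z1 + z2)%Z; rewrite plus_IZR, opp_IZR; field; lra).
Qed.


Definition eqL (U V : R * R) : Prop :=
  exists i j : Z, fst U = fst V + 2 * w * IZR i /\ snd U = snd V + 2 * IZR j.

Lemma eqL_refl U : eqL U U.
Proof. exists 0%Z, 0%Z. simpl; split; ring. Qed.
Lemma eqL_sym U V : eqL U V -> eqL V U.
Proof. intros (i & j & e1 & e2). exists (-i)%Z, (-j)%Z. rewrite !opp_IZR. split; lra. Qed.
Lemma eqL_trans U V W : eqL U V -> eqL V W -> eqL U W.
Proof. intros (i & j & e1 & e2) (i' & j' & e1' & e2'). exists (i + i')%Z, (j + j')%Z. rewrite !plus_IZR. split; lra. Qed.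
Lemma eqL_add U V W : eqL U V -> eqL (vadd U W) (vadd V W).
Proof. intros (i & j & e1 & e2). exists i, j. unfold vadd; simpl. split; lra. Qed.

Definition zetaU (U : R * R) : R := PP * fst U / w - QQ * snd U.
Definition Uof (P D : R * R) : R * R := (sgn (fst D) * fst P, sgn (snd D) * snd P).

Lemma zeta_U P D : zeta P D = zetaU (Uof P D).
Proof. unfold zeta, zetaU, Uof; simpl. field. lra. Qed.

Lemma eqL_zeta U V : eqL U V -> modeq (zetaU U) (zetaU V).
Proof.
  intros (i & j & e1 & e2). destruct PP_div as [z1 h1]. destruct QQ_div as [z2 h2].
  exists (z1 * i - z2 * j)%Z. unfold zetaU. rewrite e1, e2, minus_IZR, !mult_IZR. rewrite h1, h2. field. lra.
Qed.

Lemma zetaU_add U V : zetaU (vadd U V) = zetaU U + zetaU V.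
Proof. unfold zetaU, vadd; simpl. field. lra. Qed.

Definition ee : R * R := (aa, rr * aa).

Lemma zetaU_ee : zetaU ee = 0.
Proof. unfold zetaU, ee, rr; simpl. pose proof PP_pos; pose proof QQ_pos. field. lra. Qed.

Lemma zetaU_lin s U V : zetaU (vadd U (vscal s V)) = zetaU U + s * zetaU V.
Proof. unfold zetaU, vadd, vscal; simpl. field. lra. Qed.

Lemma zeta0_par V : zetaU V = 0 -> V = vscal (fst V / aa) ee.
Proof.
  intros h. pose proof aa_pos. unfold zetaU in h. unfold vscal, ee. destruct V as [x y]; simpl in *.
  pose proof PP_pos; pose proof QQ_pos.
  f_equal. field; lra. unfold rr.
  assert (ey : y = PP * x / w / QQ) by (field_simplify; try lra; apply (Rmult_eq_reg_l QQ); [|lra]; field_simplify; lra).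
  rewrite ey. field. repeat split; lra.
Qed.

Lemma Uof_flight P D tau : goodD D -> Uof (vadd P (vscal tau D)) D = vadd (Uof P D) (vscal tau ee).
Proof.
  intros h. pose proof (good_fst _ h) as a1. destruct h as [h1 _].
  unfold Uof, vadd, vscal, ee; simpl.
  assert (fst D <> 0) by (intro e; rewrite e, Rabs_R0 in a1; pose proof aa_pos; lra).
  assert (snd D <> 0) by (intro e; rewrite e, Rabs_R0, a1 in h1; pose proof aa_pos; pose proof rr_pos; nra).
  rewrite <- a1, <- h1, <- (sgn_mul_abs (fst D)), <- (sgn_mul_abs (snd D)) by auto. f_equal; ring.
Qed.

Lemma fold1 (s s' X X' L : R) (i : Z) : 0 < L -> (s = 1 \/ s = -1) -> (s' = 1 \/ s' = -1) ->
  0 <= X <= L -> 0 <= X' <= L -> s * X = s' * X' + 2 * L * IZR i -> X = X' /\ (0 < X < L -> s = s').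
Proof.
  intros hL hs hs' hX hX' e.
  assert (hi : (-1 <= i <= 1)%Z).
  { split.
    - destruct (Z_lt_le_dec i (-1)) as [l|l]; auto. apply IZR_lt in l. exfalso.
      destruct hs as [->| ->]; destruct hs' as [->| ->]; nra.
    - destruct (Z_lt_le_dec 1 i) as [l|l]; auto. apply IZR_lt in l. exfalso.
      destruct hs as [->| ->]; destruct hs' as [->| ->]; nra. }
  assert (hi' : i = (-1)%Z \/ i = 0%Z \/ i = 1%Z) by lia.
  destruct hi' as [->|[->| ->]];
  [assert (ei : IZR (-1) = -1) by reflexivity|assert (ei : IZR 0 = 0) by reflexivity|assert (ei : IZR 1 = 1) by reflexivity];
  try rewrite ei in e;
  destruct hs as [->| ->]; destruct hs' as [->| ->]; split; intros; lra.
Qed.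

Lemma sgn_pm x : sgn x = 1 \/ sgn x = -1.
Proof. unfold sgn; destruct (Rlt_dec 0 x); auto. Qed.

Lemma fold2 P D P' D' : 0 <= fst P <= w -> 0 <= snd P <= 1 -> 0 <= fst P' <= w -> 0 <= snd P' <= 1 ->
  eqL (Uof P D) (Uof P' D') -> P = P' /\ (0 < fst P < w -> sgn (fst D) = sgn (fst D')) /\
    (0 < snd P < 1 -> sgn (snd D) = sgn (snd D')).
Proof.
  intros h1 h2 h3 h4 (i & j & e1 & e2). unfold Uof in *; simpl in *.
  destruct (fold1 _ _ _ _ w i hw (sgn_pm _) (sgn_pm _) h1 h3 e1) as [x1 x2].
  assert (e2' : sgn (snd D) * snd P = sgn (snd D') * snd P' + 2 * 1 * IZR j) by lra.
  destruct (fold1 _ _ _ _ 1 j ltac:(lra) (sgn_pm _) (sgn_pm _) h2 h4 e2') as [y1 y2].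
  split; [destruct P, P'; simpl in *; subst; auto|]. split; auto.
Qed.


Lemma refl_eqL x y i j t : step w x y i j t -> goodD (dir i (snd x)) ->
  eqL (Uof (bpos w (fst y)) (dir j (snd y))) (Uof (bpos w (fst y)) (dir i (snd x))).
Proof.
  intros hs hg.
  pose proof (step_arrive_comp _ _ _ _ _ _ hw hs) as har.
  pose proof (bpos_on _ _ _ hw (st_j _ _ _ _ _ _ hs)) as p2.
  rewrite (st_dir _ _ _ _ _ _ hs).
  pose proof (good_fst_nz _ hg) as n1. pose proof (good_snd_nz _ hg) as n2.
  assert (hj : (j < 4)%nat) by (eapply on_side_lt4; exact (st_j _ _ _ _ _ _ hs)).
  destruct (dir i (snd x)) as [a b]. destruct (bpos w (fst y)) as [X Y].
  unfold Uof, refl in *; simpl in *.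
  destruct j as [|[|[|[|j]]]]; simpl in *; try lia; rewrite sgn_opp by auto; destruct p2 as [e _].
  - exists 0%Z, 0%Z; simpl; split; subst; ring.
  - subst X. rewrite (sgn_pos a) by auto. exists (-1)%Z, 0%Z. simpl. split; ring.
  - subst Y. rewrite (sgn_pos b) by auto. exists 0%Z, (-1)%Z. simpl. split; ring.
  - exists 0%Z, 0%Z; simpl; split; subst; ring.
Qed.

Lemma locate (t : nat -> R) n s : (forall k, (k < n)%nat -> 0 < t k) -> 0 <= s < sumR t n ->
  exists k, (k < n)%nat /\ sumR t k <= s < sumR t k + t k.
Proof.
  induction n; simpl; intros ht hs; [lra|].
  destruct (Rlt_dec s (sumR t n)) as [l|l].
  - destruct IHn as (k & hk & h); auto. split; lra. exists k; split; auto.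
  - exists n; split; auto. lra.
Qed.

Section CL.
Variables (n : nat) (itin : nat -> nat) (A : nat -> R * R).
Hypothesis hA : in_cyl w n itin A.
Hypothesis hg : forall k, (k <= n)%nat -> goodD (dir (sd n itin k) (snd (A k))).

Definition PA k := bpos w (fst (A k)).
Definition DA k := dir (sd n itin k) (snd (A k)).
Definition UA k := Uof (PA k) (DA k).
Definition tt k := (fst (PA (S k)) - fst (PA k)) / fst (DA k).
Definition TT k := sumR tt k.

Lemma cl_step k : (k < n)%nat -> step w (A k) (A (S k)) (sd n itin k) (sd n itin (S k)) (tt k).
Proof.
  intros hk. destruct (orbit_step _ _ _ _ hw hA k hk) as [t hs].
  assert (e : t = tt k).
  { pose proof (st_pos _ _ _ _ _ _ hs) as ep. unfold tt, PA, DA. rewrite ep. unfold vadd, vscal; simpl.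
    pose proof (good_fst_nz _ (hg k ltac:(lia))). field. auto. }
  subst t; auto.
Qed.

Lemma tt_pos k : (k < n)%nat -> 0 < tt k.
Proof. intros hk. exact (st_t _ _ _ _ _ _ (cl_step k hk)). Qed.

Lemma cl_U k : (k < n)%nat -> eqL (UA (S k)) (vadd (UA k) (vscal (tt k) ee)).
Proof.
  intros hk. pose proof (cl_step k hk) as hs.
  eapply eqL_trans. apply (refl_eqL _ _ _ _ _ hs (hg k ltac:(lia))).
  rewrite (st_pos _ _ _ _ _ _ hs). rewrite Uof_flight by (apply hg; lia). apply eqL_refl.
Qed.

Lemma cl_UT k : (k <= n)%nat -> eqL (UA k) (vadd (UA O) (vscal (TT k) ee)).
Proof.
  induction k; intros hk.
  - unfold TT; simpl. replace (vadd (UA 0) (vscal 0 ee)) with (UA 0); [apply eqL_refl|].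
    unfold vadd, vscal; destruct (UA 0); simpl; f_equal; ring.
  - eapply eqL_trans. apply cl_U; lia.
    replace (vadd (UA 0) (vscal (TT (S k)) ee)) with (vadd (vadd (UA 0) (vscal (TT k) ee)) (vscal (tt k) ee)).
    apply eqL_add. apply IHk; lia.
    unfold TT; simpl. unfold vadd, vscal; simpl. f_equal; ring.
Qed.

Lemma UA_n : UA n = UA O.
Proof. unfold UA, PA, DA. rewrite sd_n, sd_0 by (apply (orb_n0 _ _ _ _ hA)). destruct hA as (_&_&e&_). rewrite e. auto. Qed.

Lemma TT_pos : 0 < TT n.
Proof.
  pose proof (orb_n0 _ _ _ _ hA) as h0. unfold TT.
  assert (e : n = S (n - 1)) by lia. rewrite e. simpl.
  pose proof (sumR_nonneg tt (n - 1) ltac:(intros; left; apply tt_pos; lia)). pose proof (tt_pos (n - 1) ltac:(lia)). lra.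
Qed.

Lemma TT_lat : exists i j : Z, TT n * aa = 2 * w * IZR i /\ TT n * (rr * aa) = 2 * IZR j.
Proof.
  pose proof (cl_UT n ltac:(lia)) as h. rewrite UA_n in h. destruct h as (i & j & e1 & e2).
  exists (-i)%Z, (-j)%Z. unfold vadd, vscal, ee in *; simpl in *. rewrite !opp_IZR. split; lra.
Qed.

Lemma cl_main U : modeq (zetaU U) (zetaU (UA O)) ->
  exists k tau, (k < n)%nat /\ 0 <= tau < tt k /\ eqL U (Uof (vadd (PA k) (vscal tau (DA k))) (DA k)).
Proof.
  intros [m em]. destruct bezout_g as (al & be & eb).
  set (L := (2 * w * IZR al * IZR m, 2 * IZR be * IZR m)).
  set (V := vadd U (vscal (-1) (vadd (UA O) L))).
  assert (zV : zetaU V = 0).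
  { assert (zL : zetaU L = 2 * gg0 * IZR m) by (unfold zetaU, L; cbn [fst snd]; rewrite <- eb; field; lra).
    unfold V. rewrite zetaU_lin, zetaU_add, em, zL. ring. }
  pose proof (zeta0_par V zV) as eV. set (s := fst V / aa) in eV.
  assert (h1 : eqL U (vadd (UA O) (vscal s ee))).
  { exists (al * m)%Z, (be * m)%Z. rewrite !mult_IZR. rewrite <- eV. unfold V, L, vadd, vscal; simpl. split; ring. }
  pose proof TT_pos as hT. set (T := TT n) in *.
  set (N := (up (s / T) - 1)%Z).
  destruct (archimed (s / T)) as [a1 a2].
  assert (hN1 : IZR N <= s / T) by (unfold N; rewrite minus_IZR; simpl; lra).
  assert (hN2 : s / T < IZR N + 1) by (unfold N; rewrite minus_IZR; simpl; lra).
  set (s' := s - IZR N * T).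
  assert (hs' : 0 <= s' < T).
  { unfold s'. split.
    - apply (Rmult_le_compat_r T) in hN1; [|lra]. unfold Rdiv in hN1. rewrite Rmult_assoc, Rinv_l, Rmult_1_r in hN1; lra.
    - apply (Rmult_lt_compat_r T) in hN2; [|lra]. unfold Rdiv in hN2. rewrite Rmult_assoc, Rinv_l, Rmult_1_r in hN2; lra. }
  assert (h2 : eqL (vadd (UA O) (vscal s ee)) (vadd (UA O) (vscal s' ee))).
  { destruct TT_lat as (i & j & e1 & e2). fold T in e1, e2.
    exists (N * i)%Z, (N * j)%Z. rewrite !mult_IZR. unfold s', vadd, vscal, ee; simpl.
    split. replace ((s - IZR N * T) * aa) with (s * aa - IZR N * (T * aa)) by ring. rewrite e1. ring.
    replace ((s - IZR N * T) * (rr * aa)) with (s * (rr * aa) - IZR N * (T * (rr * aa))) by ring. rewrite e2. ring. }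
  destruct (locate tt n s' tt_pos hs') as (k & hk & hl).
  exists k, (s' - TT k). split; auto. split. unfold TT; lra.
  rewrite Uof_flight by (apply hg; lia). fold (UA k).
  eapply eqL_trans. apply h1. eapply eqL_trans. apply h2.
  apply eqL_sym. eapply eqL_trans. apply eqL_add. apply cl_UT. lia.
  replace (vadd (vadd (UA 0) (vscal (TT k) ee)) (vscal (s' - TT k) ee)) with (vadd (UA 0) (vscal s' ee)).
  apply eqL_refl. unfold vadd, vscal; simpl. f_equal; ring.
Qed.


Lemma R_in_rect k tau : (k < n)%nat -> 0 <= tau < tt k ->
  0 <= fst (vadd (PA k) (vscal tau (DA k))) <= w /\ 0 <= snd (vadd (PA k) (vscal tau (DA k))) <= 1 /\
  (0 < tau -> Defs.interior w (vadd (PA k) (vscal tau (DA k)))).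
Proof.
  intros hk ht. pose proof (cl_step k hk) as hs. unfold PA, DA in *.
  destruct (Rle_lt_or_eq_dec 0 tau (proj1 ht)) as [l|e].
  - pose proof (st_int _ _ _ _ _ _ hs tau (conj l (proj2 ht))) as hi. unfold Defs.interior in hi.
    split; [|split]; try lra; intros; auto.
  - subst tau. replace (vadd (bpos w (fst (A k))) (vscal 0 (dir (sd n itin k) (snd (A k))))) with (bpos w (fst (A k))) by (unfold vadd, vscal; destruct (bpos w (fst (A k))); simpl; f_equal; ring).
    pose proof (pt_on_rect _ _ _ hw (bpos_on _ _ _ hw (st_i _ _ _ _ _ _ hs))). split; [|split]; try tauto. intros; lra.
Qed.

Lemma CLy y iy : on_side w iy (fst y) -> - (PI/2) < snd y < PI/2 -> goodD (dir iy (snd y)) ->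
  modeq (zeta (bpos w (fst y)) (dir iy (snd y))) (zeta (PA O) (DA O)) -> exists k, (k < n)%nat /\ A k = y.
Proof.
  intros hy hth hgy hm. rewrite !zeta_U in hm. fold (UA O) in hm.
  destruct (cl_main _ hm) as (k & tau & hk & ht & heq).
  pose proof (pt_on_rect _ _ _ hw (bpos_on _ _ _ hw hy)) as [r1 r2].
  destruct (R_in_rect k tau hk ht) as (r3 & r4 & r5).
  destruct (fold2 _ _ _ _ r1 r2 r3 r4 heq) as (eP & sx & sy).
  pose proof (cl_step k hk) as hs.
  assert (t0 : tau = 0).
  { destruct (Rle_lt_or_eq_dec 0 tau (proj1 ht)) as [l|e]; auto. exfalso.
    apply (pt_on_not_interior w iy (bpos w (fst y))). apply bpos_on; auto. rewrite eP. auto. }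
  subst tau. replace (vadd (PA k) (vscal 0 (DA k))) with (PA k) in * by (unfold vadd, vscal; destruct (PA k); simpl; f_equal; ring).
  assert (ei : iy = sd n itin k).
  { apply (pt_on_unique w iy (sd n itin k) (bpos w (fst y)) hw (bpos_on _ _ _ hw hy)). rewrite eP. unfold PA.
    apply bpos_on; auto. exact (st_i _ _ _ _ _ _ hs). }
  subst iy.
  assert (es : fst y = fst (A k)) by (eapply bpos_inj; eauto; exact (st_i _ _ _ _ _ _ hs)).
  exists k; split; auto.
  assert (hik : (sd n itin k < 4)%nat) by (eapply on_side_lt4; eauto).
  assert (thk : - (PI/2) < snd (A k) < PI/2) by exact (st_thx _ _ _ _ _ _ hs).
  assert (eD : dir (sd n itin k) (snd y) = DA k).
  { apply good_eq; auto. apply hg; lia.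
    - pose proof (bpos_on _ _ _ hw hy) as po. revert po sx sy. unfold DA. rewrite !dir_eq by auto.
      pose proof (cos_pos_th _ hth). pose proof (cos_pos_th _ thk).
      destruct (bpos w (fst y)) as [X Y]. destruct (sd n itin k) as [|[|[|[|]]]]; simpl; intros; try lia; try tauto;
      try (apply sx; lra); unfold sgn; destruct (Rlt_dec _ _); destruct (Rlt_dec _ _); lra.
    - pose proof (bpos_on _ _ _ hw hy) as po. revert po sx sy. unfold DA. rewrite !dir_eq by auto.
      pose proof (cos_pos_th _ hth). pose proof (cos_pos_th _ thk).
      destruct (bpos w (fst y)) as [X Y]. destruct (sd n itin k) as [|[|[|[|]]]]; simpl; intros; try lia; try tauto;
      try (apply sy; lra); unfold sgn; destruct (Rlt_dec _ _); destruct (Rlt_dec _ _); lra. }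
  unfold DA in eD. apply dir_inj in eD; auto.
  destruct y, (A k); simpl in *; subst; auto.
Qed.

Lemma CLc : ~ ingZ (zeta (PA O) (DA O)).
Proof.
  intros [m0 em]. rewrite zeta_U in em. fold (UA O) in em.
  destruct PP_div as [p1 e1]. destruct QQ_div as [q1 e2]. pose proof gg0_pos as hgp.
  assert (hc : exists C : R * R, corner C /\ modeq (zetaU C) (zetaU (UA O))).
  { rewrite em. destruct (Z.Even_or_Odd m0) as [[z ez]|[z ez]].
    - exists (0, 0). split. unfold corner; simpl; tauto. exists (- z)%Z. rewrite ez, opp_IZR, mult_IZR.
      unfold zetaU; simpl. field. lra.
    - destruct (Z.Even_or_Odd p1) as [[z1 ez1]|[z1 ez1]].
      + destruct (Z.Even_or_Odd q1) as [[z2 ez2]|[z2 ez2]].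
        * exfalso. apply not_both_even. split; [exists z1|exists z2].
          rewrite e1, ez1, mult_IZR; simpl; ring. rewrite e2, ez2, mult_IZR; simpl; ring.
        * exists (0, 1). split. unfold corner; simpl; tauto. exists (- z2 - z - 1)%Z.
          unfold zetaU; simpl. rewrite e2, ez2, ez. rewrite !minus_IZR, opp_IZR, !plus_IZR, !mult_IZR. simpl. field. lra.
      + exists (w, 0). split. unfold corner; simpl; tauto. exists (z1 - z)%Z.
        unfold zetaU; simpl. rewrite e1, ez1, ez. rewrite !minus_IZR, !plus_IZR, !mult_IZR. simpl. field. lra. }
  destruct hc as (C & hC & hm).
  destruct (cl_main _ hm) as (k & tau & hk & ht & heq).
  destruct (R_in_rect k tau hk ht) as (r3 & r4 & r5).
  replace C with (Uof C (1, 1)) in heq by (unfold Uof; simpl; rewrite sgn_pos by lra; destruct C; simpl; f_equal; ring).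
  assert (rc : 0 <= fst C <= w /\ 0 <= snd C <= 1) by (destruct hC as [[h|h] [h'|h']]; rewrite h, h'; lra).
  destruct (fold2 _ _ _ _ (proj1 rc) (proj2 rc) r3 r4 heq) as (eP & _ & _).
  destruct (Rle_lt_or_eq_dec 0 tau (proj1 ht)) as [l|e].
  - pose proof (r5 l) as hi. rewrite <- eP in hi. unfold Defs.interior in hi.
    destruct hC as [[h|h] [h'|h']]; rewrite ?h, ?h' in hi; lra.
  - subst tau. replace (vadd (PA k) (vscal 0 (DA k))) with (PA k) in eP by (unfold vadd, vscal; destruct (PA k); simpl; f_equal; ring).
    pose proof (bpos_on _ _ _ hw (st_i _ _ _ _ _ _ (cl_step k hk))) as po. fold (PA k) in po. rewrite <- eP in po.
    destruct hC as [[h|h] [h'|h']]; destruct C as [X Y]; simpl in *; subst;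
    destruct (sd n itin k) as [|[|[|[|]]]]; simpl in po; lra.
Qed.


Lemma seg_corner i P v : pt_on w i P -> (Nat.even i = true -> snd v = 0) -> (Nat.even i = false -> fst v = 0) ->
  ~ pt_on w i (vadd P v) -> exists lam, 0 < lam <= 1 /\ corner (vadd P (vscal lam v)).
Proof.
  intros hP h1 h2 hn. destruct P as [X Y], v as [a b]. unfold corner, vadd, vscal in *; simpl in *.
  destruct i as [|[|[|[|i]]]]; simpl in *; try contradiction.
  - specialize (h1 eq_refl). subst b. destruct hP as [-> hX].
    destruct (Rle_dec (X + a) 0).
    + exists (X / - a). assert (a < 0) by lra. split. split. apply Rdiv_lt_0_compat; lra.
      apply (Rmult_le_reg_r (- a)); [lra|]. field_simplify; lra.
      split; [left; field; lra|left; ring].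
    + assert (w <= X + a) by (destruct (Rle_dec w (X + a)); auto; exfalso; apply hn; lra).
      exists ((w - X) / a). assert (0 < a) by lra. split. split. apply Rdiv_lt_0_compat; lra.
      apply (Rmult_le_reg_r a); [lra|]. field_simplify; lra.
      split; [right; field; lra|left; ring].
  - specialize (h2 eq_refl). subst a. destruct hP as [-> hY].
    destruct (Rle_dec (Y + b) 0).
    + exists (Y / - b). assert (b < 0) by lra. split. split. apply Rdiv_lt_0_compat; lra.
      apply (Rmult_le_reg_r (- b)); [lra|]. field_simplify; lra.
      split; [right; ring|left; field; lra].
    + assert (1 <= Y + b) by (destruct (Rle_dec 1 (Y + b)); auto; exfalso; apply hn; lra).
      exists ((1 - Y) / b). assert (0 < b) by lra. split. split. apply Rdiv_lt_0_compat; lra.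
      apply (Rmult_le_reg_r b); [lra|]. field_simplify; lra.
      split; [right; ring|right; field; lra].
  - specialize (h1 eq_refl). subst b. destruct hP as [-> hX].
    destruct (Rle_dec (X + a) 0).
    + exists (X / - a). assert (a < 0) by lra. split. split. apply Rdiv_lt_0_compat; lra.
      apply (Rmult_le_reg_r (- a)); [lra|]. field_simplify; lra.
      split; [left; field; lra|right; ring].
    + assert (w <= X + a) by (destruct (Rle_dec w (X + a)); auto; exfalso; apply hn; lra).
      exists ((w - X) / a). assert (0 < a) by lra. split. split. apply Rdiv_lt_0_compat; lra.
      apply (Rmult_le_reg_r a); [lra|]. field_simplify; lra.
      split; [right; field; lra|right; ring].
  - specialize (h2 eq_refl). subst a. destruct hP as [-> hY].
    destruct (Rle_dec (Y + b) 0).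
    + exists (Y / - b). assert (b < 0) by lra. split. split. apply Rdiv_lt_0_compat; lra.
      apply (Rmult_le_reg_r (- b)); [lra|]. field_simplify; lra.
      split; [left; ring|left; field; lra].
    + assert (1 <= Y + b) by (destruct (Rle_dec 1 (Y + b)); auto; exfalso; apply hn; lra).
      exists ((1 - Y) / b). assert (0 < b) by lra. split. split. apply Rdiv_lt_0_compat; lra.
      apply (Rmult_le_reg_r b); [lra|]. field_simplify; lra.
      split; [left; ring|right; field; lra].
Qed.

Lemma orb_zeta k : (k <= n)%nat -> modeq (zeta (PA k) (DA k)) (zeta (PA O) (DA O)).
Proof.
  induction k; intros hk; [apply modeq_refl|].
  pose proof (cl_step k ltac:(lia)) as hs. unfold PA, DA in *.
  rewrite (zeta_step _ _ _ _ _ hs (hg k ltac:(lia))).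
  eapply modeq_trans; [|apply IHk; lia].
  replace (zeta (bpos w (fst (A k))) (dir (sd n itin k) (snd (A k)))) with
    (zeta (bpos w (fst (A k))) (dir (sd n itin k) (snd (A k))) + 0) at 2 by ring.
  destruct (JJ_mod (sd n itin (S k))) as [z ez]. exists z. lra.
Qed.

Definition vv k : R * R := if Nat.even (sd n itin k) then (w * sgn (fst (DA k)) / PP, 0) else (0, - sgn (snd (DA k)) / QQ).
Definition Pe (eps : R) k : R * R := vadd (PA k) (vscal eps (vv k)).

Lemma zeta_lin P v D : zeta (vadd P v) D = zeta P D + (PP * sgn (fst D) * fst v / w - QQ * sgn (snd D) * snd v).
Proof. unfold zeta, vadd; simpl. field. lra. Qed.

Lemma zeta_Pe eps k : zeta (Pe eps k) (DA k) = zeta (PA k) (DA k) + eps.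
Proof.
  unfold Pe. rewrite zeta_lin. pose proof PP_pos; pose proof QQ_pos. unfold vv, vscal.
  destruct (Nat.even (sd n itin k)); cbn [fst snd].
  - pose proof (sgn_sq (fst (DA k))). set (u := sgn (fst (DA k))) in *. clearbody u. field_simplify; try lra.
    replace (u ^ 2) with 1 by (rewrite <- H1; ring). field; lra.
  - pose proof (sgn_sq (snd (DA k))). set (u := sgn (snd (DA k))) in *. clearbody u. field_simplify; try lra.
    replace (u ^ 2) with 1 by (rewrite <- H1; ring). field; lra.
Qed.

Lemma zeta_Pe_prev eps k : (k < n)%nat -> zeta (Pe eps (S k)) (DA k) = zeta (PA (S k)) (DA k) + eps.
Proof.
  intros hk. pose proof (cl_step k hk) as hs.
  assert (hd : DA (S k) = refl (sd n itin (S k)) (DA k)) by exact (st_dir _ _ _ _ _ _ hs).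
  pose proof (good_fst_nz _ (hg k ltac:(lia))) as n1. pose proof (good_snd_nz _ (hg k ltac:(lia))) as n2.
  fold (DA k) in n1, n2.
  unfold Pe. rewrite zeta_lin. pose proof PP_pos; pose proof QQ_pos. unfold vv, vscal. rewrite hd. unfold refl.
  destruct (Nat.even (sd n itin (S k))); cbn [fst snd].
  - pose proof (sgn_sq (fst (DA k))). set (u := sgn (fst (DA k))) in *. clearbody u. field_simplify; try lra.
    replace (u ^ 2) with 1 by (rewrite <- H1; ring). field; lra.
  - pose proof (sgn_sq (snd (DA k))). set (u := sgn (snd (DA k))) in *. clearbody u. field_simplify; try lra.
    replace (u ^ 2) with 1 by (rewrite <- H1; ring). field; lra.
Qed.

Lemma par_of_zeta P P' D : goodD D -> zeta P' D = zeta P D ->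
  P' = vadd P (vscal ((fst P' - fst P) / fst D) D).
Proof.
  intros hgD e. pose proof (good_fst_nz _ hgD) as n1. pose proof (good_snd_nz _ hgD) as n2.
  pose proof (good_fst _ hgD) as a1. destruct hgD as [h1 _].
  unfold zeta in e. destruct P as [X Y], P' as [X' Y'], D as [a b]. unfold vadd, vscal; simpl in *.
  pose proof PP_pos; pose proof QQ_pos. pose proof aa_pos.
  assert (ea : a = sgn a * aa) by (rewrite <- a1; apply sgn_abs; auto).
  assert (eb : b = sgn b * (rr * aa)) by (rewrite <- a1, <- h1; apply sgn_abs; auto).
  pose proof (sgn_sq a) as sa2. pose proof (sgn_sq b) as sb2. pose proof (sgn_pm a) as pa. pose proof (sgn_pm b) as pb.
  set (sa := sgn a) in *. set (sb := sgn b) in *. clearbody sa sb.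
  assert (e2 : QQ * sb * (Y' - Y) = PP * sa * (X' - X) / w).
  { unfold Rdiv in *. apply (Rplus_eq_reg_r (QQ * sb * Y - PP * sa * X' * / w)). ring_simplify. lra. }
  assert (e3 : Y' - Y = rr * sa * sb * (X' - X)).
  { unfold rr. apply (Rmult_eq_reg_l (QQ * sb)). 2: intro z; apply Rmult_integral in z; destruct z; subst; lra.
    rewrite e2. destruct pb as [-> | ->]; field; lra. }
  f_equal. field; auto.
  rewrite eb, ea. replace Y' with (Y + (Y' - Y)) by ring. rewrite e3.
  destruct pa as [-> | ->]; field; lra.
Qed.


Definition Ae (eps : R) k : R * R := (spos w (sd n itin k) (Pe eps k), snd (A k)).
Definition valid (eps : R) : Prop := forall k, (k < n)%nat -> pt_on w (sd n itin k) (Pe eps k).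

Lemma An0 : A n = A O.
Proof. destruct hA as (_&_&e&_); auto. Qed.

Lemma Pe_n eps : Pe eps n = Pe eps O.
Proof.
  pose proof (orb_n0 _ _ _ _ hA) as h0.
  unfold Pe, vv, PA, DA. rewrite sd_n, sd_0, An0 by auto. auto.
Qed.

Lemma valid_le eps k : valid eps -> (k <= n)%nat -> pt_on w (sd n itin k) (Pe eps k).
Proof.
  intros hv hk. destruct (Nat.eq_dec k n) as [e|e].
  - subst k. rewrite Pe_n, sd_n. rewrite <- (sd_0 n itin) by (apply (orb_n0 _ _ _ _ hA)). apply hv. apply (orb_n0 _ _ _ _ hA).
  - apply hv; lia.
Qed.

Lemma fam_orbit eps : valid eps -> in_cyl w n itin (Ae eps).
Proof.
  intros hv. pose proof (orb_n0 _ _ _ _ hA) as h0. split; [auto|split; [|split]].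
  - intros k hk. pose proof (cl_step k hk) as hs.
    destruct (spos_ok w _ _ hw (valid_le eps k hv ltac:(lia))) as [o1 b1].
    destruct (spos_ok w _ _ hw (valid_le eps (S k) hv ltac:(lia))) as [o2 b2].
    apply (build_step w _ _ (sd n itin k) (sd n itin (S k)) ((fst (Pe eps (S k)) - fst (Pe eps k)) / fst (DA k))); auto.
    + exact (step_ij _ _ _ _ _ _ hw hs).
    + exact (st_thx _ _ _ _ _ _ hs).
    + exact (st_thy _ _ _ _ _ _ hs).
    + unfold Ae; cbn [fst snd]. rewrite b1, b2. fold (DA k). apply par_of_zeta. apply hg; lia.
      rewrite zeta_Pe_prev, zeta_Pe by auto. unfold PA at 1. rewrite (st_pos _ _ _ _ _ _ hs).
      rewrite zeta_flight by (apply hg; lia). auto.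
    + unfold Ae; cbn [fst snd]. exact (st_dir _ _ _ _ _ _ hs).
  - unfold Ae. rewrite Pe_n, sd_n, sd_0, An0 by auto. auto.
  - intros k hk. unfold Ae; simpl. destruct (spos_ok w _ _ hw (hv k hk)) as [o1 _]. rewrite sd_lt in * by auto; auto.
Qed.

Lemma Ae_snd eps k : snd (Ae eps k) = snd (A k).
Proof. reflexivity. Qed.

Lemma Ae_pos eps k : valid eps -> (k <= n)%nat -> bpos w (fst (Ae eps k)) = Pe eps k.
Proof. intros hv hk. unfold Ae; simpl. destruct (spos_ok w _ _ hw (valid_le eps k hv hk)); auto. Qed.

Lemma cover z m : gg0 * IZR m < zeta (PA O) (DA O) < gg0 * (IZR m + 1) ->
  gg0 * IZR m < z < gg0 * (IZR m + 1) -> valid (z - zeta (PA O) (DA O)).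
Proof.
  intros h1 h2 k hk. set (eps := z - zeta (PA 0) (DA 0)).
  destruct (classic (pt_on w (sd n itin k) (Pe eps k))) as [h|h]; auto. exfalso.
  pose proof (cl_step k hk) as hs.
  assert (hP : pt_on w (sd n itin k) (PA k)) by (apply bpos_on; auto; exact (st_i _ _ _ _ _ _ hs)).
  destruct (seg_corner _ _ (vscal eps (vv k)) hP) as (lam & hl & hc).
  - intros e. unfold vv, vscal. rewrite e. simpl. ring.
  - intros e. unfold vv, vscal. rewrite e. simpl. ring.
  - exact h.
  - assert (ec : vadd (PA k) (vscal lam (vscal eps (vv k))) = Pe (lam * eps) k).
    { unfold Pe, vadd, vscal; simpl. f_equal; ring. }
    rewrite ec in hc. pose proof (zeta_corner _ (DA k) hc) as hz. rewrite zeta_Pe in hz.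
    assert (hm : modeq (zeta (PA k) (DA k) + lam * eps) (zeta (PA O) (DA O) + lam * eps)).
    { apply modeq_add. apply orb_zeta; lia. }
    pose proof (modeq_ingZ _ _ (modeq_sym _ _ hm) hz) as hz2.
    apply (ingZ_between _ m hz2). unfold eps in *.
    destruct (Rle_dec z (zeta (PA 0) (DA 0))); split; nra.
Qed.


Lemma cls_exists : exists m : Z, gg0 * IZR m < zeta (PA O) (DA O) < gg0 * (IZR m + 1).
Proof.
  pose proof gg0_pos as hg0. set (z := zeta (PA 0) (DA 0)).
  destruct (archimed (z / gg0)) as [a1 a2].
  exists (up (z / gg0) - 1)%Z. rewrite minus_IZR. simpl.
  assert (b1 : gg0 * (IZR (up (z / gg0)) - 1) <= z).
  { replace z with (gg0 * (z / gg0)) at 2 by (field; lra). apply Rmult_le_compat_l; lra. }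
  assert (b2 : z < gg0 * (IZR (up (z / gg0)) - 1 + 1)).
  { replace z with (gg0 * (z / gg0)) at 1 by (field; lra). apply Rmult_lt_compat_l; lra. }
  split; auto. destruct (Rle_lt_or_eq_dec _ _ b1) as [l|e]; auto. exfalso. apply CLc.
  fold z. exists (up (z / gg0) - 1)%Z. rewrite minus_IZR. simpl. lra.
Qed.

End CL.

Lemma meet n itin A y iy m d : in_cyl w n itin A -> (forall k, (k <= n)%nat -> goodD (dir (sd n itin k) (snd (A k)))) ->
  gg0 * IZR m < zeta (PA A O) (DA n itin A O) < gg0 * (IZR m + 1) ->
  on_side w iy (fst y) -> - (PI/2) < snd y < PI/2 -> goodD (dir iy (snd y)) ->
  gg0 * IZR (m + 2 * d) < zeta (bpos w (fst y)) (dir iy (snd y)) < gg0 * (IZR (m + 2 * d) + 1) ->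
  cyl_set w n itin y.
Proof.
  intros hA hg hm hy hth hgy hd.
  set (zy := zeta (bpos w (fst y)) (dir iy (snd y))) in *.
  set (z := zy - 2 * gg0 * IZR d).
  assert (hz : gg0 * IZR m < z < gg0 * (IZR m + 1)).
  { unfold z. rewrite plus_IZR, mult_IZR in hd. simpl in hd. lra. }
  pose proof (cover n itin A hA hg z m hm hz) as hv.
  set (eps := z - zeta (PA A 0) (DA n itin A 0)) in hv.
  pose proof (fam_orbit n itin A hA hg eps hv) as hA'.
  assert (hg' : forall k, (k <= n)%nat -> goodD (dir (sd n itin k) (snd (Ae n itin A eps k)))).
  { intros k hk. rewrite Ae_snd. auto. }
  destruct (CLy n itin (Ae n itin A eps) hA' hg' y iy hy hth hgy) as (k & hk & e).
  - unfold PA at 1, DA at 1. rewrite Ae_pos by (auto; lia). rewrite Ae_snd. fold (DA n itin A 0).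
    rewrite zeta_Pe. unfold eps. exists d. fold zy. unfold z. ring.
  - exists (Ae n itin A eps), k. auto.
Qed.


Lemma zeta_inj_side i P P' D : pt_on w i P -> pt_on w i P' -> zeta P D = zeta P' D -> P = P'.
Proof.
  intros h h' e. unfold zeta in e. pose proof PP_pos; pose proof QQ_pos.
  pose proof (sgn_pm (fst D)) as s1. pose proof (sgn_pm (snd D)) as s2.
  destruct P as [X Y], P' as [X' Y']. simpl in *.
  destruct i as [|[|[|[|i]]]]; simpl in *; try contradiction; destruct h as [h1 _], h' as [h1' _]; subst;
  f_equal; auto;
  [destruct s1 as [s1|s1] | destruct s2 as [s2|s2] | destruct s1 as [s1|s1] | destruct s2 as [s2|s2]];
  rewrite s1 in e || rewrite s2 in e;
  try (apply (Rmult_eq_reg_l PP); [|lra]; apply (Rmult_eq_reg_r (/ w)); [|apply Rinv_neq_0_compat; lra]; unfold Rdiv in e; lra);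
  try (apply (Rmult_eq_reg_l QQ); lra).
Qed.

Section DIR.
Variables (x x' : nat -> R * R) (s s' : nat -> nat).
Hypothesis hx : forall m, exists t, step w (x m) (x (S m)) (s m) (s (S m)) t.
Hypothesis hx' : forall m, exists t, step w (x' m) (x' (S m)) (s' m) (s' (S m)) t.

Definition Dx m := dir (s m) (snd (x m)).
Definition Dx' m := dir (s' m) (snd (x' m)).

Lemma arrive_sgn_fst (y : nat -> R * R) (sy : nat -> nat) m :
  (forall m, exists t, step w (y m) (y (S m)) (sy m) (sy (S m)) t) -> Nat.even (sy (S m)) = false ->
  sgn (fst (dir (sy m) (snd (y m)))) = if (sy (S m) =? 1)%nat then 1 else -1.
Proof.
  intros hy he. destruct (hy m) as [t hs]. pose proof (step_arrive_comp _ _ _ _ _ _ hw hs) as ha.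
  assert (hj : (sy (S m) < 4)%nat) by (eapply on_side_lt4; exact (st_j _ _ _ _ _ _ hs)).
  destruct (sy (S m)) as [|[|[|[|]]]]; simpl in *; try discriminate; try lia.
  - apply sgn_pos; auto.
  - apply sgn_neg; auto.
Qed.

Lemma arrive_sgn_snd (y : nat -> R * R) (sy : nat -> nat) m :
  (forall m, exists t, step w (y m) (y (S m)) (sy m) (sy (S m)) t) -> Nat.even (sy (S m)) = true ->
  sgn (snd (dir (sy m) (snd (y m)))) = if (sy (S m) =? 2)%nat then 1 else -1.
Proof.
  intros hy he. destruct (hy m) as [t hs]. pose proof (step_arrive_comp _ _ _ _ _ _ hw hs) as ha.
  assert (hj : (sy (S m) < 4)%nat) by (eapply on_side_lt4; exact (st_j _ _ _ _ _ _ hs)).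
  destruct (sy (S m)) as [|[|[|[|]]]]; simpl in *; try discriminate; try lia.
  - apply sgn_neg; auto.
  - apply sgn_pos; auto.
Qed.

Lemma fst_keep (y : nat -> R * R) (sy : nat -> nat) m :
  (forall m, exists t, step w (y m) (y (S m)) (sy m) (sy (S m)) t) -> Nat.even (sy (S m)) = true ->
  fst (dir (sy (S m)) (snd (y (S m)))) = fst (dir (sy m) (snd (y m))).
Proof. intros hy he. destruct (hy m) as [t hs]. rewrite (st_dir _ _ _ _ _ _ hs). unfold refl. rewrite he. auto. Qed.

Lemma snd_keep (y : nat -> R * R) (sy : nat -> nat) m :
  (forall m, exists t, step w (y m) (y (S m)) (sy m) (sy (S m)) t) -> Nat.even (sy (S m)) = false ->
  snd (dir (sy (S m)) (snd (y (S m)))) = snd (dir (sy m) (snd (y m))).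
Proof. intros hy he. destruct (hy m) as [t hs]. rewrite (st_dir _ _ _ _ _ _ hs). unfold refl. rewrite he. auto. Qed.

Lemma dir_sgn_fst d : forall m m', (forall i, (i <= S d)%nat -> s (m + i)%nat = s' (m' + i)%nat) ->
  Nat.even (s (m + S d)%nat) = false -> sgn (fst (Dx m)) = sgn (fst (Dx' m')).
Proof.
  induction d; intros m m' hs he.
  - unfold Dx, Dx'. rewrite (arrive_sgn_fst x s m hx), (arrive_sgn_fst x' s' m' hx').
    + replace (S m) with (m + 1)%nat by lia. replace (S m') with (m' + 1)%nat by lia. rewrite hs by lia. auto.
    + replace (S m') with (m' + 1)%nat by lia. rewrite <- hs by lia. replace (m + 1)%nat with (m + 1)%nat by lia. auto.
    + replace (S m) with (m + 1)%nat by lia. auto.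
  - destruct (Nat.even (s (S m))) eqn:E.
    + unfold Dx, Dx'. rewrite <- (fst_keep x s m hx E).
      assert (E' : Nat.even (s' (S m')) = true).
      { replace (S m') with (m' + 1)%nat by lia. rewrite <- hs by lia. replace (m + 1)%nat with (S m) by lia. auto. }
      rewrite <- (fst_keep x' s' m' hx' E').
      apply (IHd (S m) (S m')). intros i hi. replace (S m + i)%nat with (m + S i)%nat by lia.
      replace (S m' + i)%nat with (m' + S i)%nat by lia. apply hs; lia.
      replace (S m + S d)%nat with (m + S (S d))%nat by lia. auto.
    + unfold Dx, Dx'. rewrite (arrive_sgn_fst x s m hx E).
      assert (E' : Nat.even (s' (S m')) = false).
      { replace (S m') with (m' + 1)%nat by lia. rewrite <- hs by lia. replace (m + 1)%nat with (S m) by lia. auto. }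
      rewrite (arrive_sgn_fst x' s' m' hx' E').
      replace (S m) with (m + 1)%nat by lia. replace (S m') with (m' + 1)%nat by lia. rewrite hs by lia. auto.
Qed.

Lemma dir_sgn_snd d : forall m m', (forall i, (i <= S d)%nat -> s (m + i)%nat = s' (m' + i)%nat) ->
  Nat.even (s (m + S d)%nat) = true -> sgn (snd (Dx m)) = sgn (snd (Dx' m')).
Proof.
  induction d; intros m m' hs he.
  - unfold Dx, Dx'. rewrite (arrive_sgn_snd x s m hx), (arrive_sgn_snd x' s' m' hx').
    + replace (S m) with (m + 1)%nat by lia. replace (S m') with (m' + 1)%nat by lia. rewrite hs by lia. auto.
    + replace (S m') with (m' + 1)%nat by lia. rewrite <- hs by lia. auto.
    + replace (S m) with (m + 1)%nat by lia. auto.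
  - destruct (Nat.even (s (S m))) eqn:E.
    + unfold Dx, Dx'. rewrite (arrive_sgn_snd x s m hx E).
      assert (E' : Nat.even (s' (S m')) = true).
      { replace (S m') with (m' + 1)%nat by lia. rewrite <- hs by lia. replace (m + 1)%nat with (S m) by lia. auto. }
      rewrite (arrive_sgn_snd x' s' m' hx' E').
      replace (S m) with (m + 1)%nat by lia. replace (S m') with (m' + 1)%nat by lia. rewrite hs by lia. auto.
    + unfold Dx, Dx'. rewrite <- (snd_keep x s m hx E).
      assert (E' : Nat.even (s' (S m')) = false).
      { replace (S m') with (m' + 1)%nat by lia. rewrite <- hs by lia. replace (m + 1)%nat with (S m) by lia. auto. }
      rewrite <- (snd_keep x' s' m' hx' E').
      apply (IHd (S m) (S m')). intros i hi. replace (S m + i)%nat with (m + S i)%nat by lia.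
      replace (S m' + i)%nat with (m' + S i)%nat by lia. apply hs; lia.
      replace (S m + S d)%nat with (m + S (S d))%nat by lia. auto.
Qed.

End DIR.


Lemma find_d n k0 m : (0 < n)%nat -> (k0 < n)%nat -> exists d, ((m + S d) mod n = k0)%nat.
Proof.
  intros h0 hk. exists ((n - 1) * (m + 1) + k0)%nat.
  replace (m + S ((n - 1) * (m + 1) + k0))%nat with (k0 + (m + 1) * n)%nat by nia.
  rewrite Nat.Div0.mod_add. apply Nat.mod_small; auto.
Qed.

Lemma share_sub n itin n' itin' x :
  (forall B, in_cyl w n itin B -> forall k, (k <= n)%nat -> goodD (dir (sd n itin k) (snd (B k)))) ->
  (exists k0, (k0 < n)%nat /\ Nat.even (itin k0) = false) ->
  (exists k1, (k1 < n)%nat /\ Nat.even (itin k1) = true) ->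
  cyl_set w n itin x -> cyl_set w n' itin' x ->
  forall y, cyl_set w n itin y -> cyl_set w n' itin' y.
Proof.
  intros hgX [k0 [hk0 ek0]] [k1 [hk1 ek1]] (a & k & ha & hk & ex) (a' & l & ha' & hl & ex') y (b & i & hb & hi & ey).
  pose proof (orb_n0 _ _ _ _ ha) as n0. pose proof (orb_n0 _ _ _ _ ha') as n0'.
  set (ae := fun m => a (m mod n)%nat). set (a'e := fun m => a' (m mod n')%nat). set (be := fun m => b (m mod n)%nat).
  set (sx := fun m => itin (m mod n)%nat).
  assert (sta : forall m, exists t, step w (ae m) (ae (S m)) (sx m) (sx (S m)) t) by (intros m; apply ext_step; auto).
  assert (stb : forall m, exists t, step w (be m) (be (S m)) (sx m) (sx (S m)) t) by (intros m; apply ext_step; auto).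
  assert (sta' : forall m, exists t, step w (a'e m) (a'e (S m)) (itin' (m mod n')%nat) (itin' ((S m) mod n')%nat) t)
    by (intros m; apply ext_step; auto).
  assert (e1 : forall m, a'e (l + m)%nat = ae (k + m)%nat).
  { induction m.
    - unfold a'e, ae. rewrite !Nat.add_0_r, !Nat.mod_small by auto. congruence.
    - destruct (sta' (l + m)%nat) as [t1 s1]. destruct (sta (k + m)%nat) as [t2 s2].
      apply step_Bill in s1. apply step_Bill in s2. rewrite IHm in s1.
      replace (l + S m)%nat with (S (l + m)) by lia. replace (k + S m)%nat with (S (k + m)) by lia.
      eapply Bill_det; eauto. }
  remember (n * n')%nat as NN eqn:eNN.
  assert (hNN : (n' <= NN)%nat) by (subst; nia).
  set (s0 := (k + NN - l)%nat).
  assert (e2 : forall m, ae (s0 + m)%nat = a'e m).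
  { intros m. transitivity (a'e (l + (m + NN - l))%nat).
    - rewrite e1. f_equal. unfold s0. lia.
    - unfold a'e. replace (l + (m + NN - l))%nat with (m + n * n')%nat by lia.
      rewrite Nat.Div0.mod_add. auto. }
  assert (e3 : forall m, ae (s0 + n' + m)%nat = ae (s0 + m)%nat).
  { intros m. replace (s0 + n' + m)%nat with (s0 + (m + 1 * n'))%nat by lia. rewrite !e2.
    unfold a'e. rewrite Nat.Div0.mod_add. auto. }
  assert (sideA : forall m, on_side w (sx m) (fst (ae m))).
  { intros m. destruct (sta m) as [t st]. exact (st_i _ _ _ _ _ _ st). }
  assert (sideB : forall m, on_side w (sx m) (fst (be m))).
  { intros m. destruct (stb m) as [t st]. exact (st_i _ _ _ _ _ _ st). }
  assert (e4 : forall m, (m < n')%nat -> itin' m = sx (s0 + m)%nat).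
  { intros m hm. apply (on_side_unique w _ _ (fst (a' m)) hw).
    destruct ha' as (_&_&_&h). apply h; auto.
    pose proof (sideA (s0 + m)%nat) as h. rewrite e2 in h. unfold a'e in h. rewrite Nat.mod_small in h; auto. }
  assert (e5 : forall m, sx (s0 + n' + m)%nat = sx (s0 + m)%nat).
  { intros m. apply (on_side_unique w _ _ (fst (ae (s0 + m)%nat)) hw). rewrite <- e3. apply sideA. apply sideA. }
  assert (goodE : forall (c : nat -> R * R), in_cyl w n itin c -> forall m, goodD (dir (sx m) (snd (c (m mod n)%nat)))).
  { intros c hc m. pose proof (hgX c hc (m mod n)%nat ltac:(pose proof (Nat.mod_upper_bound m n ltac:(lia)); lia)) as h.
    rewrite sd_lt in h by (apply Nat.mod_upper_bound; lia). exact h. }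
  set (Za := fun m => zeta (bpos w (fst (ae m))) (dir (sx m) (snd (ae m)))).
  set (Zb := fun m => zeta (bpos w (fst (be m))) (dir (sx m) (snd (be m)))).
  assert (za : forall m, Za (S m) = Za m + JJ (sx (S m))).
  { intros m. destruct (sta m) as [t st]. apply (zeta_step _ _ _ _ _ st). apply goodE; auto. }
  assert (zb : forall m, Zb (S m) = Zb m + JJ (sx (S m))).
  { intros m. destruct (stb m) as [t st]. apply (zeta_step _ _ _ _ _ st). apply goodE; auto. }
  assert (e6 : forall m, Zb (s0 + m)%nat - Zb s0 = Za (s0 + m)%nat - Za s0).
  { induction m. rewrite Nat.add_0_r. ring.
    replace (s0 + S m)%nat with (S (s0 + m)) by lia. rewrite za, zb. lra. }
  assert (e7 : Za (s0 + n')%nat = Za s0).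
  { unfold Za. pose proof (e3 O) as h. rewrite !Nat.add_0_r in h. rewrite h.
    pose proof (e5 O) as h'. rewrite !Nat.add_0_r in h'. rewrite h'. auto. }
  assert (e8 : Zb (s0 + n')%nat = Zb s0) by (pose proof (e6 n'); lra).
  assert (eD : dir (sx (s0 + n')%nat) (snd (be (s0 + n')%nat)) = dir (sx s0) (snd (be s0))).
  { assert (hs : forall i, (sx (s0 + n' + i)%nat = sx (s0 + i)%nat)) by auto.
    destruct (find_d n k0 (s0 + n')%nat n0 hk0) as [d1 hd1].
    destruct (find_d n k1 (s0 + n')%nat n0 hk1) as [d2 hd2].
    apply good_eq; [apply goodE; auto|apply goodE; auto| |].
    - apply (dir_sgn_fst be be sx sx stb stb d1). intros j _. apply hs.
      unfold sx. rewrite hd1. auto.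
    - apply (dir_sgn_snd be be sx sx stb stb d2). intros j _. apply hs.
      unfold sx. rewrite hd2. auto. }
  assert (eb : be (s0 + n')%nat = be s0).
  { pose proof (e5 O) as h5. rewrite !Nat.add_0_r in h5.
    assert (hP : bpos w (fst (be (s0 + n')%nat)) = bpos w (fst (be s0))).
    { apply (zeta_inj_side (sx s0) _ _ (dir (sx s0) (snd (be s0)))).
      rewrite <- h5. apply bpos_on; auto. apply bpos_on; auto.
      unfold Zb in e8. rewrite eD in e8. auto. }
    assert (hs1 : fst (be (s0 + n')%nat) = fst (be s0)).
    { apply (bpos_inj w (sx s0)); auto. rewrite <- h5; auto. }
    assert (hs2 : snd (be (s0 + n')%nat) = snd (be s0)).
    { rewrite h5 in eD. apply dir_inj in eD; auto.
      eapply on_side_lt4; apply sideB.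
      destruct (stb (s0 + n')%nat) as [t st]. exact (st_thx _ _ _ _ _ _ st).
      destruct (stb s0) as [t st]. exact (st_thx _ _ _ _ _ _ st). }
    destruct (be (s0 + n')%nat), (be s0); simpl in *; subst; auto. }
  set (b' := fun m => be (s0 + m)%nat).
  assert (hb' : in_cyl w n' itin' b').
  { split; auto. split; [|split].
    - intros m hm. unfold b'. replace (s0 + S m)%nat with (S (s0 + m)) by lia.
      destruct (stb (s0 + m)%nat) as [t st]. eapply step_Bill; eauto.
    - unfold b'. rewrite Nat.add_0_r. auto.
    - intros m hm. unfold b'. rewrite e4 by auto. apply sideB. }
  assert (per : forall m, b' (m + n')%nat = b' m).
  { induction m.
    - simpl. unfold b'. rewrite Nat.add_0_r. auto.
    - destruct (stb (s0 + (m + n'))%nat) as [t1 s1]. destruct (stb (s0 + m)%nat) as [t2 s2].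
      apply step_Bill in s1. apply step_Bill in s2.
      fold (b' (m + n')%nat) in s1. fold (b' m) in s2. rewrite IHm in s1.
      unfold b'. replace (s0 + (S m + n'))%nat with (S (s0 + (m + n'))) by lia. replace (s0 + S m)%nat with (S (s0 + m)) by lia.
      eapply Bill_det; eauto. }
  assert (per2 : forall c r, b' (r + c * n')%nat = b' r).
  { induction c; intros r. rewrite Nat.mul_0_l, Nat.add_0_r; auto.
    replace (r + S c * n')%nat with ((r + c * n') + n')%nat by lia. rewrite per. auto. }
  set (M := (i + (s0 + 1) * n - s0)%nat).
  assert (hM : b' M = y).
  { unfold b', M. replace (s0 + (i + (s0 + 1) * n - s0))%nat with (i + (s0 + 1) * n)%nat by nia.
    unfold be. rewrite Nat.Div0.mod_add. rewrite Nat.mod_small by auto. auto. }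
  exists b', (M mod n')%nat. split; auto. split. apply Nat.mod_upper_bound; lia.
  rewrite <- hM. rewrite (Nat.div_mod_eq M n') at 2. rewrite Nat.add_comm, Nat.mul_comm. rewrite per2. auto.
Qed.


Section Final.
Hypothesis hsp : special_width w p q.

Definition SS n itin : Prop := lam_stable_cyl w n itin /\ ~ ping_pong w n itin.

Lemma SS_good n itin : SS n itin -> forall B, in_cyl w n itin B -> forall k, (k <= n)%nat -> goodD (dir (sd n itin k) (snd (B k))).
Proof.
  intros [hs hnp] B hB k hk. pose proof (slope_part w p q n itin hw hp hq hsp hs hnp) as hsl.
  assert (gen : forall j, (j < n)%nat -> goodD (dir (itin j) (snd (B j)))).
  { intros j hj. split. rewrite (hsl B hB j hj). unfold rr, PP, QQ. auto.
    apply dir_unit. destruct hB as (_&_&_&h). eapply on_side_lt4; apply h; auto. }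
  pose proof (orb_n0 _ _ _ _ hB) as h0.
  destruct (Nat.eq_dec k n) as [e|e].
  - subst k. rewrite sd_n. destruct hB as (_&_&e&_). rewrite e. apply gen; auto.
  - rewrite sd_lt by lia. apply gen; lia.
Qed.

Lemma cnt_pos (f : nat -> bool) n : (0 < cnt f n)%nat -> exists k, (k < n)%nat /\ f k = true.
Proof.
  induction n; simpl; intros h; [lia|]. destruct (f n) eqn:E.
  - exists n; split; auto.
  - destruct IHn as (k & hk & e); [lia|]. exists k; split; auto.
Qed.

Lemma SS_parity n itin : SS n itin ->
  (exists k0, (k0 < n)%nat /\ Nat.even (itin k0) = false) /\ (exists k1, (k1 < n)%nat /\ Nat.even (itin k1) = true).
Proof.
  intros [hs hnp]. destruct (nonpp_HV w n itin hw hs hnp) as [h1 h2]. split.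
  - destruct (cnt_pos _ _ h2) as (k & hk & e). exists k; split; auto. unfold oddb in e. destruct (Nat.even (itin k)); auto.
  - destruct (cnt_pos _ _ h1) as (k & hk & e). exists k; split; auto.
Qed.

Lemma SS_share n itin n' itin' : SS n itin -> SS n' itin' ->
  (exists x, cyl_set w n itin x /\ cyl_set w n' itin' x) -> forall y, cyl_set w n itin y <-> cyl_set w n' itin' y.
Proof.
  intros h h' [x [hx hx']] y. destruct (SS_parity _ _ h) as [o e]. destruct (SS_parity _ _ h') as [o' e'].
  split.
  - apply (share_sub n itin n' itin' x (SS_good _ _ h) o e hx hx').
  - apply (share_sub n' itin' n itin x (SS_good _ _ h') o' e' hx' hx).
Qed.

Definition meetc n itin (c : bool) : Prop :=
  exists B, in_cyl w n itin B /\ exists m : Z, gg0 * IZR m < zeta (PA B O) (DA n itin B O) < gg0 * (IZR m + 1) /\ Z.even m = c.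

Lemma meets_some n itin : SS n itin -> exists c, meetc n itin c.
Proof.
  intros h. pose proof h as [[[B [hB _]] _] _].
  destruct (cls_exists n itin B hB (SS_good _ _ h B hB)) as [m hm].
  exists (Z.even m), B. split; auto. exists m. split; auto.
Qed.

Lemma same_class_share n itin n' itin' c : SS n itin -> SS n' itin' -> meetc n itin c -> meetc n' itin' c ->
  exists x, cyl_set w n itin x /\ cyl_set w n' itin' x.
Proof.
  intros h h' (A & hA & mA & hmA & eA) (B & hB & mB & hmB & eB).
  pose proof (orb_n0 _ _ _ _ hB) as n0'.
  exists (B O). split.
  - assert (ev : Z.even (mB - mA) = true) by (rewrite Z.even_sub, eA, eB; destruct c; auto).
    apply Z.even_spec in ev. destruct ev as [d ed].
    apply (meet n itin A (B O) (itin' O) mA d hA (SS_good _ _ h A hA) hmA).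
    + pose proof (orbit_side _ _ _ _ _ hB O ltac:(lia)) as hs. rewrite sd_0 in hs; auto.
    + apply (orb_th _ _ _ _ hw hB). lia.
    + pose proof (SS_good _ _ h' B hB O ltac:(lia)) as g. rewrite sd_0 in g; auto.
    + replace (mA + 2 * d)%Z with mB by lia. unfold PA, DA in hmB. rewrite sd_0 in hmB; auto.
  - exists B, O. split; auto.
Qed.

Lemma at_most_two_aux : exists A B : R * R -> Prop, forall n itin, lam_stable_cyl w n itin -> ~ ping_pong w n itin ->
    (forall x, cyl_set w n itin x <-> A x) \/ (forall x, cyl_set w n itin x <-> B x).
Proof.
  set (Af := fun c x => exists n itin, SS n itin /\ meetc n itin c /\ cyl_set w n itin x).
  exists (Af true), (Af false). intros n itin hs hnp.
  assert (h : SS n itin) by (split; auto).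
  destruct (meets_some n itin h) as [c hc].
  assert (key : forall x, cyl_set w n itin x <-> Af c x).
  { intros x. split.
    - intros hx. exists n, itin. auto.
    - intros (n' & itin' & h' & hc' & hx). pose proof (same_class_share _ _ _ _ c h h' hc hc') as hsh.
      apply (SS_share _ _ _ _ h h' hsh). auto. }
  destruct c; [left|right]; auto.
Qed.

End Final.

End P4.

Theorem proposition4p6 (w : R) (hw : 0 < w) :
  lam_stable_cyl w 2 (fun k => if Nat.even k then 0%nat else 2%nat) /\
  lam_stable_cyl w 2 (fun k => if Nat.even k then 1%nat else 3%nat) /\
  ((forall p q : nat, (0 < p)%nat -> (0 < q)%nat -> ~ special_width w p q) ->
   forall (n : nat) (itin : nat -> nat),
     lam_stable_cyl w n itin -> ping_pong w n itin) /\
  (forall p q : nat, (0 < p)%nat -> (0 < q)%nat -> special_width w p q ->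
   exists A B : R * R -> Prop,
     forall (n : nat) (itin : nat -> nat),
       lam_stable_cyl w n itin -> ~ ping_pong w n itin ->
       ((forall x, cyl_set w n itin x <-> A x) \/
        (forall x, cyl_set w n itin x <-> B x)) /\
       cyl_abs_slope w n itin (INR p / (INR q * w))).
Proof.
  split; [apply part1; auto|]. split; [apply part2; auto|]. split.
  - intros hns n itin hs.
    destruct (Nat.eq_dec (Hn n itin) 0) as [e|e]. apply H0_pp; auto. apply hs.
    destruct (Nat.eq_dec (Vn n itin) 0) as [e'|e']. apply V0_pp; auto. apply hs.
    exfalso. apply (hns (Hn n itin) (Vn n itin)); try lia. apply stable_special; auto; lia.
  - intros p q hp hq hsp. destruct (at_most_two_aux w p q hw hp hq hsp) as (A & B & hAB).
    exists A, B. intros n itin hs hnp. split. apply hAB; auto. apply slope_part; auto.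
Qed.
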